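(* Let $\mathbb{H}$ be a real Hilbert space and $0\neq T\in\mathbb{B}(\mathbb{H})$. Then the following are equivalent: (i) $T$ is a smooth point of $\mathbb{B}(\mathbb{H})$. (ii) $M_T=\{\pm x_0\}$ for some $x_0\in S_{\mathbb{H}}$, and $\|T|_{H_0}\|<\|T\|$, where $H_0=\{x_0\}^{\perp}$ is the orthogonal complement of $x_0$. (iii) For every $A\in\mathbb{B}(\mathbb{H})$: $T\perp_B A$ if and only if for every norming sequence $\{x_n\}$ for $T$, every subsequential limit of $\{\langle Ax_n,Tx_n\rangle\}$ equals $0$.
   Context: $\mathbb{B}(\mathbb{H})$ carries the operator norm; $S_{\mathbb{H}}$ is the unit sphere; $M_T=\{x\in S_{\mathbb{H}}:\|Tx\|=\|T\|\}$. A nonzero element $x$ of a normed space $\mathbb{Z}$ is smooth if there is a unique $f\in\mathbb{Z}^*$ with $\|f\|=1$, $f(x)=\|x\|$. $S\perp_B A$ means $\|S+\lambda A\|\ge\|S\|$ for all real $\lambda$. A norming sequence for $T$ is $\{x_n\}\subseteq S_{\mathbb{H}}$ with $\|Tx_n\|\to\|T\|$. *)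

(* Defs.v *)
From Stdlib Require Import Reals Lra ClassicalEpsilon.
Open Scope R_scope.

Record RHilbert := {
  carrier :> Type;
  vzero : carrier;
  vadd : carrier -> carrier -> carrier;
  vopp : carrier -> carrier;
  vscal : R -> carrier -> carrier;
  inner : carrier -> carrier -> R;
  vadd_assoc : forall x y z, vadd x (vadd y z) = vadd (vadd x y) z;
  vadd_comm : forall x y, vadd x y = vadd y x;
  vadd_0 : forall x, vadd x vzero = x;
  vadd_opp : forall x, vadd x (vopp x) = vzero;
  vscal_1 : forall x, vscal 1 x = x;
  vscal_assoc : forall a b x, vscal a (vscal b x) = vscal (a * b) x;
  vscal_distr_R : forall a b x, vscal (a + b) x = vadd (vscal a x) (vscal b x);
  vscal_distr_V : forall a x y, vscal a (vadd x y) = vadd (vscal a x) (vscal a y);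
  inner_sym : forall x y, inner x y = inner y x;
  inner_add_l : forall x y z, inner (vadd x y) z = inner x z + inner y z;
  inner_scal_l : forall a x y, inner (vscal a x) y = a * inner x y;
  inner_pos : forall x, 0 <= inner x x;
  inner_def : forall x, inner x x = 0 -> x = vzero;
  complete : forall u : nat -> carrier,
    (forall eps, eps > 0 -> exists N, forall m n, (m >= N)%nat -> (n >= N)%nat ->
        sqrt (inner (vadd (u m) (vopp (u n))) (vadd (u m) (vopp (u n)))) < eps) ->
    exists l, forall eps, eps > 0 -> exists N, forall n, (n >= N)%nat ->
        sqrt (inner (vadd (u n) (vopp l)) (vadd (u n) (vopp l))) < eps
}.

Arguments vzero {_}.
Arguments vadd {_} _ _.
Arguments vopp {_} _.
Arguments vscal {_} _ _.
Arguments inner {_} _ _.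

Definition nrm {H : RHilbert} (x : H) : R := sqrt (inner x x).

Definition is_linear {H : RHilbert} (A : H -> H) : Prop :=
  (forall x y, A (vadd x y) = vadd (A x) (A y)) /\
  (forall a x, A (vscal a x) = vscal a (A x)).

Definition is_bounded {H : RHilbert} (A : H -> H) : Prop :=
  exists c, forall x, nrm (A x) <= c * nrm x.

Definition BL {H : RHilbert} (A : H -> H) : Prop := is_linear A /\ is_bounded A.

Definition op_add {H : RHilbert} (A B : H -> H) : H -> H := fun x => vadd (A x) (B x).
Definition op_scal {H : RHilbert} (a : R) (A : H -> H) : H -> H := fun x => vscal a (A x).

(** sup { ||A x|| : x in P, ||x|| <= 1 } (chosen as the least upper bound,
    which exists for bounded A and P containing 0). *)
Definition opnorm_on {H : RHilbert} (A : H -> H) (P : H -> Prop) : R :=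
  epsilon (inhabits 0)
    (fun c => is_lub (fun r => exists x, P x /\ nrm x <= 1 /\ r = nrm (A x)) c).

Definition opnorm {H : RHilbert} (A : H -> H) : R := opnorm_on A (fun _ => True).

Definition orth {H : RHilbert} (x0 : H) : H -> Prop := fun x => inner x x0 = 0.

Definition M_set {H : RHilbert} (T : H -> H) : H -> Prop :=
  fun x => nrm x = 1 /\ nrm (T x) = opnorm T.

(** f is an element of B(H)^* of norm 1 with f(T) = ||T||
    (functionals are functions on H -> H; only their values on B(H) matter). *)
Definition support_functional {H : RHilbert} (T : H -> H) (f : (H -> H) -> R) : Prop :=
  (forall A B, BL A -> BL B -> f (op_add A B) = f A + f B) /\
  (forall a A, BL A -> f (op_scal a A) = a * f A) /\
  is_lub (fun r => exists A, BL A /\ opnorm A <= 1 /\ r = Rabs (f A)) 1 /\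
  f T = opnorm T.

Definition smooth_point {H : RHilbert} (T : H -> H) : Prop :=
  exists f, support_functional T f /\
    forall g, support_functional T g -> forall A, BL A -> g A = f A.

Definition BJ_orth {H : RHilbert} (S A : H -> H) : Prop :=
  forall lam : R, opnorm (op_add S (op_scal lam A)) >= opnorm S.

Definition norming_seq {H : RHilbert} (T : H -> H) (xs : nat -> H) : Prop :=
  (forall n, nrm (xs n) = 1) /\ Un_cv (fun n => nrm (T (xs n))) (opnorm T).

Definition subseq_limit (a : nat -> R) (l : R) : Prop :=
  exists phi : nat -> nat, (forall n, (phi n < phi (S n))%nat) /\
    Un_cv (fun n => a (phi n)) l.

(* Main.v *)
Require Import Defs.
From Stdlib Require Import Reals Lra Psatz ClassicalEpsilon Classical ZArith Lia Arith List.
From mathcomp Require boolp classical_sets filter.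
Open Scope R_scope.


Arguments vadd_assoc {_} _ _ _.
Arguments vadd_comm {_} _ _.
Arguments vadd_0 {_} _.
Arguments vadd_opp {_} _.
Arguments vscal_1 {_} _.
Arguments vscal_assoc {_} _ _ _.
Arguments vscal_distr_R {_} _ _ _.
Arguments vscal_distr_V {_} _ _ _.
Arguments inner_sym {_} _ _.
Arguments inner_add_l {_} _ _ _.
Arguments inner_scal_l {_} _ _ _.
Arguments inner_pos {_} _.
Arguments inner_def {_} _ _.
Arguments complete {_} _ _.

Definition vsub {H : RHilbert} (x y : H) : H := vadd x (vopp y).

Lemma vadd_0l {H : RHilbert} (x : H) : vadd vzero x = x.
Proof. rewrite vadd_comm. apply vadd_0. Qed.

Lemma vadd_cancel_l {H : RHilbert} (a b c : H) : vadd a b = vadd a c -> b = c.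
Proof.
  intro E.
  assert (E2 : vadd (vopp a) (vadd a b) = vadd (vopp a) (vadd a c)) by (rewrite E; reflexivity).
  rewrite !vadd_assoc in E2. rewrite (vadd_comm (vopp a) a), vadd_opp, !vadd_0l in E2. exact E2.
Qed.

Lemma vscal_0 {H : RHilbert} (x : H) : vscal 0 x = vzero.
Proof.
  apply (vadd_cancel_l (vscal 0 x)). rewrite vadd_0. rewrite <- (vscal_distr_R 0 0 x). f_equal. ring.
Qed.

Lemma vscal_zero {H : RHilbert} (a : R) : vscal a (@vzero H) = vzero.
Proof.
  rewrite <- (vscal_0 vzero), vscal_assoc. f_equal. ring.
Qed.

Lemma vopp_scal {H : RHilbert} (x : H) : vopp x = vscal (-1) x.
Proof.
  apply (vadd_cancel_l x). rewrite vadd_opp. replace (vadd x (vscal (-1) x)) with (vadd (vscal 1 x) (vscal (-1) x)) by (rewrite vscal_1; reflexivity).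
  rewrite <- vscal_distr_R. replace (1 + -1) with 0 by ring. symmetry; apply vscal_0.
Qed.

Lemma inner_add_r {H : RHilbert} (x y z : H) : inner x (vadd y z) = inner x y + inner x z.
Proof. rewrite inner_sym, inner_add_l, (inner_sym y), (inner_sym z). reflexivity. Qed.

Lemma inner_scal_r {H : RHilbert} (a : R) (x y : H) : inner x (vscal a y) = a * inner x y.
Proof. rewrite inner_sym, inner_scal_l, inner_sym. reflexivity. Qed.

Lemma inner_0_l {H : RHilbert} (y : H) : inner vzero y = 0.
Proof. rewrite <- (vscal_0 vzero), inner_scal_l. ring. Qed.

Lemma inner_0_r {H : RHilbert} (y : H) : inner y vzero = 0.
Proof. rewrite inner_sym. apply inner_0_l. Qed.

Lemma inner_opp_l {H : RHilbert} (x y : H) : inner (vopp x) y = - inner x y.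
Proof. rewrite vopp_scal, inner_scal_l. ring. Qed.

Lemma inner_opp_r {H : RHilbert} (x y : H) : inner x (vopp y) = - inner x y.
Proof. rewrite vopp_scal, inner_scal_r. ring. Qed.

Lemma inner_sub_l {H : RHilbert} (x y z : H) : inner (vsub x y) z = inner x z - inner y z.
Proof. unfold vsub. rewrite inner_add_l, inner_opp_l. ring. Qed.

Lemma inner_sub_r {H : RHilbert} (x y z : H) : inner z (vsub x y) = inner z x - inner z y.
Proof. unfold vsub. rewrite inner_add_r, inner_opp_r. ring. Qed.

Ltac inner_simpl := repeat (rewrite ?inner_add_l, ?inner_add_r, ?inner_scal_l, ?inner_scal_r,
   ?inner_sub_l, ?inner_sub_r, ?inner_opp_l, ?inner_opp_r, ?inner_0_l, ?inner_0_r).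

Lemma discr_le (a b c : R) : (forall t, 0 <= a + 2 * t * b + t * t * c) -> b * b <= a * c.
Proof.
  intro Ht.
  assert (Hc : 0 <= c).
  { destruct (Rle_or_lt 0 c) as [h|h]; auto.
    pose proof (Ht ((Rabs a + 2 * Rabs b + 1) / (- c) + 1)) as h1.
    exfalso. set (t := (Rabs a + 2 * Rabs b + 1) / (- c) + 1) in *.
    assert (ht1 : 1 <= t). { unfold t. assert (0 <= (Rabs a + 2 * Rabs b + 1) / - c).
      apply Rle_mult_inv_pos. pose proof (Rabs_pos a); pose proof (Rabs_pos b); lra. lra. lra. }
    assert (ht2 : t * (-c) >= Rabs a + 2 * Rabs b + 1).
    { unfold t. rewrite Rmult_plus_distr_r. unfold Rdiv. rewrite Rmult_assoc, Rinv_l by lra. lra. }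
    pose proof (Rle_abs a). pose proof (Rle_abs (-b)). rewrite Rabs_Ropp in *.
    assert (e1 : t * t * c <= t * (- (Rabs a + 2 * Rabs b + 1))).
    { replace (t * t * c) with (- (t * (t * - c))) by ring.
      apply Ropp_le_cancel. rewrite Ropp_involutive.
      replace (- (t * - (Rabs a + 2 * Rabs b + 1))) with (t * (Rabs a + 2 * Rabs b + 1)) by ring.
      apply Rmult_le_compat_l; lra. }
    assert (e2 : 2 * t * b <= 2 * t * Rabs b).
    { apply Rmult_le_compat_l. lra. apply Rle_abs. }
    assert (e3 : a <= t * Rabs a).
    { pose proof (Rabs_pos a). pose proof (Rle_abs a). nra. }
    lra. }
  destruct (Rle_lt_or_eq_dec 0 c Hc) as [hc|hc].
  - pose proof (Ht (- b / c)) as h. unfold Rdiv in h.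
    replace (a + 2 * (- b * / c) * b + - b * / c * (- b * / c) * c) with (a - b * b / c) in h
      by (field; lra).
    apply Rmult_le_reg_r with (/ c). apply Rinv_0_lt_compat; lra.
    replace (a * c * / c) with a by (field; lra). unfold Rdiv in h. lra.
  - subst c. destruct (Req_dec b 0) as [hb|hb]. subst b. nra.
    pose proof (Ht (- (Rabs a + 1) / (2 * b))) as h.
    replace (a + 2 * (- (Rabs a + 1) / (2 * b)) * b + - (Rabs a + 1) / (2 * b) * (- (Rabs a + 1) / (2 * b)) * 0)
      with (a - (Rabs a + 1)) in h by (field; lra).
    pose proof (Rle_abs a). lra.
Qed.

Lemma form_CS {H : RHilbert} (B : H -> H -> R)
  (Badd : forall x y z, B (vadd x y) z = B x z + B y z)
  (Bscal : forall a x y, B (vscal a x) y = a * B x y)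
  (Bsym : forall x y, B x y = B y x)
  (Bpos : forall x, 0 <= B x x) :
  forall x y, B x y * B x y <= B x x * B y y.
Proof.
  intros x y. apply discr_le. intro t.
  pose proof (Bpos (vadd x (vscal t y))) as h.
  assert (Baddr : forall x y z, B z (vadd x y) = B z x + B z y).
  { intros a b c. rewrite (Bsym c (vadd a b)), Badd, (Bsym a c), (Bsym b c). reflexivity. }
  assert (Bscalr : forall a x y, B y (vscal a x) = a * B y x).
  { intros a b c. rewrite (Bsym c (vscal a b)), Bscal, (Bsym b c). reflexivity. }
  rewrite Badd, !Baddr, !Bscal, !Bscalr, (Bsym y x) in h.
  nra.
Qed.

Lemma CS {H : RHilbert} (x y : H) : inner x y * inner x y <= inner x x * inner y y.
Proof. apply form_CS; intros; [apply inner_add_l|apply inner_scal_l|apply inner_sym|apply inner_pos]. Qed.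

Lemma nrm_pos {H : RHilbert} (x : H) : 0 <= nrm x.
Proof. apply sqrt_pos. Qed.

Lemma nrm_sq {H : RHilbert} (x : H) : nrm x * nrm x = inner x x.
Proof. apply sqrt_sqrt, inner_pos. Qed.

Lemma nrm_zero {H : RHilbert} : nrm (@vzero H) = 0.
Proof. unfold nrm. rewrite inner_0_l. apply sqrt_0. Qed.


Lemma nrm_scal {H : RHilbert} (a : R) (x : H) : nrm (vscal a x) = Rabs a * nrm x.
Proof.
  unfold nrm. rewrite inner_scal_l, inner_scal_r, <- Rmult_assoc, sqrt_mult_alt.
  - f_equal. replace (a * a) with (Rabs a * Rabs a). apply sqrt_square. apply Rabs_pos.
    rewrite <- Rabs_mult. apply Rabs_right. nra.
  - nra.
Qed.

Lemma sq_le_pos (a b : R) : 0 <= b -> a * a <= b * b -> a <= b.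
Proof. intros. nra. Qed.

Lemma abs_sq_le (a b : R) : 0 <= b -> a * a <= b * b -> Rabs a <= b.
Proof. intros. apply sq_le_pos; auto. rewrite <- Rabs_mult. rewrite Rabs_right by nra. auto. Qed.

Lemma inner_le {H : RHilbert} (x y : H) : Rabs (inner x y) <= nrm x * nrm y.
Proof.
  apply abs_sq_le. apply Rmult_le_pos; apply nrm_pos.
  replace (nrm x * nrm y * (nrm x * nrm y)) with ((nrm x * nrm x) * (nrm y * nrm y)) by ring.
  rewrite !nrm_sq. apply CS.
Qed.

Lemma inner_le' {H : RHilbert} (x y : H) : inner x y <= nrm x * nrm y.
Proof. pose proof (inner_le x y). pose proof (Rle_abs (inner x y)). lra. Qed.

Lemma nrm_eq0 {H : RHilbert} (x : H) : nrm x = 0 -> x = vzero.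
Proof. intro h. apply inner_def. rewrite <- nrm_sq, h. ring. Qed.

Lemma nrm_le_sq {H : RHilbert} (x : H) (c : R) : 0 <= c -> inner x x <= c * c -> nrm x <= c.
Proof. intros. apply sq_le_pos; auto. rewrite nrm_sq. auto. Qed.

Lemma nrm_triangle {H : RHilbert} (x y : H) : nrm (vadd x y) <= nrm x + nrm y.
Proof.
  apply nrm_le_sq. pose proof (nrm_pos x); pose proof (nrm_pos y); lra.
  inner_simpl. rewrite (inner_sym y x). pose proof (inner_le' x y).
  pose proof (nrm_sq x). pose proof (nrm_sq y). nra.
Qed.

Lemma nrm_opp {H : RHilbert} (x : H) : nrm (vopp x) = nrm x.
Proof. rewrite vopp_scal, nrm_scal. rewrite (Rabs_left (-1)) by lra. ring. Qed.

Lemma nrm_sub_sym {H : RHilbert} (x y : H) : nrm (vsub x y) = nrm (vsub y x).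
Proof. unfold nrm. f_equal. inner_simpl. rewrite (inner_sym x y). ring. Qed.

Lemma nrm_sub_triangle {H : RHilbert} (x y : H) : nrm x - nrm y <= nrm (vsub x y).
Proof.
  assert (E : x = vadd (vsub x y) y).
  { unfold vsub. rewrite <- vadd_assoc, (vadd_comm (vopp y) y), vadd_opp, vadd_0. reflexivity. }
  pose proof (nrm_triangle (vsub x y) y). rewrite <- E in H0. lra.
Qed.

Lemma nrm_sub_abs {H : RHilbert} (x y : H) : Rabs (nrm x - nrm y) <= nrm (vsub x y).
Proof.
  apply Rabs_le. pose proof (nrm_sub_triangle x y). pose proof (nrm_sub_triangle y x).
  rewrite nrm_sub_sym in H1. lra.
Qed.

Lemma vsub_add {H : RHilbert} (x y : H) : vadd (vsub x y) y = x.
Proof. unfold vsub. rewrite <- vadd_assoc, (vadd_comm (vopp y) y), vadd_opp, vadd_0. reflexivity. Qed.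

Lemma vsub_eq0 {H : RHilbert} (x y : H) : vsub x y = vzero -> x = y.
Proof. intro h. rewrite <- (vsub_add x y), h. apply vadd_0l. Qed.

Lemma vsub_self {H : RHilbert} (x : H) : vsub x x = vzero.
Proof. apply vadd_opp. Qed.

Lemma lin_zero {H : RHilbert} (A : H -> H) : is_linear A -> A vzero = vzero.
Proof. intros [_ hs]. rewrite <- (vscal_0 vzero), hs, !vscal_0. reflexivity. Qed.

Lemma lin_opp {H : RHilbert} (A : H -> H) x : is_linear A -> A (vopp x) = vopp (A x).
Proof. intros [_ hs]. rewrite !vopp_scal, hs. reflexivity. Qed.

Lemma lin_sub {H : RHilbert} (A : H -> H) x y : is_linear A -> A (vsub x y) = vsub (A x) (A y).
Proof. intros hl. unfold vsub. rewrite (proj1 hl), lin_opp; auto. Qed.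

Definition nset {H : RHilbert} (A : H -> H) (P : H -> Prop) : R -> Prop :=
  fun r => exists x, P x /\ nrm x <= 1 /\ r = nrm (A x).

Lemma opnorm_lub {H : RHilbert} (A : H -> H) (P : H -> Prop) :
  BL A -> P vzero -> is_lub (nset A P) (opnorm_on A P).
Proof.
  intros [hl [c hc]] h0.
  unfold opnorm_on. apply epsilon_spec.
  assert (hb : bound (nset A P)).
  { exists (Rabs c). intros r [x [_ [hx ->]]]. eapply Rle_trans. apply hc.
    pose proof (nrm_pos x). pose proof (Rle_abs c). pose proof (Rabs_pos c). nra. }
  assert (hn : exists r, nset A P r).
  { exists (nrm (A vzero)). exists vzero. split; auto. rewrite nrm_zero. split; [lra|auto]. }
  destruct (completeness _ hb hn) as [m hm]. exists m. exact hm.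
Qed.

Lemma opnorm_ge {H : RHilbert} (A : H -> H) (P : H -> Prop) x :
  BL A -> P vzero -> P x -> nrm x <= 1 -> nrm (A x) <= opnorm_on A P.
Proof. intros hA h0 hx h1. apply (proj1 (opnorm_lub A P hA h0)). exists x. auto. Qed.

Lemma opnorm_le {H : RHilbert} (A : H -> H) (P : H -> Prop) c :
  BL A -> P vzero -> (forall x, P x -> nrm x <= 1 -> nrm (A x) <= c) -> opnorm_on A P <= c.
Proof. intros hA h0 hc. apply (proj2 (opnorm_lub A P hA h0)). intros r [x [hx [h1 ->]]]. auto. Qed.

Lemma opnorm_nonneg {H : RHilbert} (A : H -> H) (P : H -> Prop) :
  BL A -> P vzero -> 0 <= opnorm_on A P.
Proof.
  intros hA h0. eapply Rle_trans; [|apply (opnorm_ge A P vzero hA h0 h0)].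
  apply nrm_pos. rewrite nrm_zero; lra.
Qed.

Lemma opnorm_approx {H : RHilbert} (A : H -> H) (P : H -> Prop) eps :
  BL A -> P vzero -> eps > 0 -> exists x, P x /\ nrm x <= 1 /\ opnorm_on A P - eps < nrm (A x).
Proof.
  intros hA h0 he. destruct (classic (exists x, P x /\ nrm x <= 1 /\ opnorm_on A P - eps < nrm (A x))) as [h|h]; auto.
  exfalso. assert (opnorm_on A P <= opnorm_on A P - eps); [|lra].
  apply opnorm_le; auto. intros x hx h1. destruct (Rle_or_lt (nrm (A x)) (opnorm_on A P - eps)); auto.
  exfalso; apply h; exists x; auto.
Qed.

Lemma opnorm_bound {H : RHilbert} (A : H -> H) (P : H -> Prop) x :
  BL A -> P vzero -> (forall a y, P y -> P (vscal a y)) -> P x ->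
  nrm (A x) <= opnorm_on A P * nrm x.
Proof.
  intros hA h0 hs hx. destruct (Req_dec (nrm x) 0) as [e|e].
  - rewrite (nrm_eq0 x e), lin_zero by apply hA. rewrite nrm_zero. pose proof (opnorm_nonneg A P hA h0). nra.
  - pose proof (nrm_pos x).
    pose proof (opnorm_ge A P (vscal (/ nrm x) x) hA h0 (hs _ _ hx)) as h.
    rewrite nrm_scal, (proj2 (proj1 hA)), nrm_scal, Rabs_right in h.
    2:{ apply Rle_ge, Rlt_le, Rinv_0_lt_compat; lra. }
    rewrite Rinv_l in h by lra. specialize (h (Rle_refl _)).
    apply Rmult_le_reg_l with (/ nrm x). apply Rinv_0_lt_compat; lra.
    replace (/ nrm x * (opnorm_on A P * nrm x)) with (opnorm_on A P) by (field; lra). lra.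
Qed.

Lemma opn_ge {H : RHilbert} (A : H -> H) x : BL A -> nrm x <= 1 -> nrm (A x) <= opnorm A.
Proof. intros. apply opnorm_ge; auto. Qed.

Lemma opn_le {H : RHilbert} (A : H -> H) c : BL A -> (forall x, nrm x <= 1 -> nrm (A x) <= c) -> opnorm A <= c.
Proof. intros. apply opnorm_le; auto. Qed.

Lemma opn_nonneg {H : RHilbert} (A : H -> H) : BL A -> 0 <= opnorm A.
Proof. intros. apply opnorm_nonneg; auto. Qed.

Lemma opn_bound {H : RHilbert} (A : H -> H) x : BL A -> nrm (A x) <= opnorm A * nrm x.
Proof. intros. apply opnorm_bound; auto. Qed.

Lemma opn_approx {H : RHilbert} (A : H -> H) eps :
  BL A -> eps > 0 -> exists x, nrm x <= 1 /\ opnorm A - eps < nrm (A x).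
Proof. intros. destruct (opnorm_approx A (fun _ => True) eps) as [x [_ h]]; eauto. Qed.

Lemma vadd_swap {H : RHilbert} (a b c d : H) : vadd (vadd a b) (vadd c d) = vadd (vadd a c) (vadd b d).
Proof. rewrite <- !vadd_assoc. f_equal. rewrite !vadd_assoc. f_equal. apply vadd_comm. Qed.

Lemma BL_add {H : RHilbert} (A B : H -> H) : BL A -> BL B -> BL (op_add A B).
Proof.
  intros hA hB. unfold op_add. split; [split|].
  - intros x y. rewrite (proj1 (proj1 hA)), (proj1 (proj1 hB)). apply vadd_swap.
  - intros a x. rewrite (proj2 (proj1 hA)), (proj2 (proj1 hB)). symmetry. apply vscal_distr_V.
  - exists (opnorm A + opnorm B). intro x. eapply Rle_trans. apply nrm_triangle.
    pose proof (opn_bound A x hA). pose proof (opn_bound B x hB). lra.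
Qed.

Lemma BL_scal {H : RHilbert} (c : R) (A : H -> H) : BL A -> BL (op_scal c A).
Proof.
  intros hA. unfold op_scal. split; [split|].
  - intros x y. rewrite (proj1 (proj1 hA)). apply vscal_distr_V.
  - intros a x. rewrite (proj2 (proj1 hA)), !vscal_assoc. f_equal. ring.
  - exists (Rabs c * opnorm A). intro x. rewrite nrm_scal. rewrite Rmult_assoc.
    apply Rmult_le_compat_l. apply Rabs_pos. apply opn_bound; auto.
Qed.

Lemma BL_rank1 {H : RHilbert} (u v : H) : BL (fun z => vscal (inner z u) v).
Proof.
  split; [split|].
  - intros x y. rewrite inner_add_l. apply vscal_distr_R.
  - intros a x. rewrite inner_scal_l, vscal_assoc. reflexivity.
  - exists (nrm u * nrm v). intro x. rewrite nrm_scal.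
    pose proof (inner_le x u). pose proof (nrm_pos v). pose proof (nrm_pos u). pose proof (nrm_pos x). nra.
Qed.

Lemma BL_comp {H : RHilbert} (A B : H -> H) : BL A -> BL B -> BL (fun z => A (B z)).
Proof.
  intros hA hB. split; [split|].
  - intros x y. rewrite (proj1 (proj1 hB)), (proj1 (proj1 hA)). reflexivity.
  - intros a x. rewrite (proj2 (proj1 hB)), (proj2 (proj1 hA)). reflexivity.
  - exists (opnorm A * opnorm B). intro x. eapply Rle_trans. apply opn_bound; auto.
    rewrite Rmult_assoc. apply Rmult_le_compat_l. apply opn_nonneg; auto. apply opn_bound; auto.
Qed.

Definition Df {H : RHilbert} (T : H -> H) (x y : H) : R :=
  opnorm T * opnorm T * inner x y - inner (T x) (T y).

Lemma Df_add {H : RHilbert} (T : H -> H) x y z : is_linear T -> Df T (vadd x y) z = Df T x z + Df T y z.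
Proof. intros hl. unfold Df. rewrite (proj1 hl). inner_simpl. ring. Qed.

Lemma Df_scal {H : RHilbert} (T : H -> H) a x y : is_linear T -> Df T (vscal a x) y = a * Df T x y.
Proof. intros hl. unfold Df. rewrite (proj2 hl). inner_simpl. ring. Qed.

Lemma Df_sym {H : RHilbert} (T : H -> H) x y : Df T x y = Df T y x.
Proof. unfold Df. rewrite (inner_sym x y), (inner_sym (T x)). reflexivity. Qed.

Lemma Df_pos {H : RHilbert} (T : H -> H) x : BL T -> 0 <= Df T x x.
Proof.
  intros hT. unfold Df. rewrite <- !nrm_sq. pose proof (opn_bound T x hT).
  pose proof (nrm_pos (T x)). pose proof (nrm_pos x). pose proof (opn_nonneg T hT). nra.
Qed.

Lemma Df_CS {H : RHilbert} (T : H -> H) x y : BL T -> Df T x y * Df T x y <= Df T x x * Df T y y.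
Proof.
  intros hT. apply form_CS; intros. apply Df_add, hT. apply Df_scal, hT. apply Df_sym. apply Df_pos, hT.
Qed.

Definition sD {H : RHilbert} (T : H -> H) (x : H) : R := sqrt (Df T x x).

Lemma sD_triangle {H : RHilbert} (T : H -> H) x y : BL T -> sD T (vadd x y) <= sD T x + sD T y.
Proof.
  intros hT. unfold sD. apply sq_le_pos. pose proof (sqrt_pos (Df T x x)); pose proof (sqrt_pos (Df T y y)); lra.
  rewrite sqrt_sqrt by (apply Df_pos, hT).
  rewrite Df_add, (Df_sym T x (vadd x y)), (Df_sym T y (vadd x y)), !Df_add, (Df_sym T y x) by apply hT.
  pose proof (Df_CS T x y hT). pose proof (sqrt_sqrt _ (Df_pos T x hT)). pose proof (sqrt_sqrt _ (Df_pos T y hT)).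
  pose proof (sqrt_pos (Df T x x)); pose proof (sqrt_pos (Df T y y)).
  assert (Df T x y <= sqrt (Df T x x) * sqrt (Df T y y)).
  { apply sq_le_pos. nra. replace (sqrt (Df T x x) * sqrt (Df T y y) * (sqrt (Df T x x) * sqrt (Df T y y)))
      with ((sqrt (Df T x x) * sqrt (Df T x x)) * (sqrt (Df T y y) * sqrt (Df T y y))) by ring. nra. }
  nra.
Qed.

Lemma sD_scal {H : RHilbert} (T : H -> H) a x : BL T -> sD T (vscal a x) = Rabs a * sD T x.
Proof.
  intros hT. unfold sD. rewrite Df_scal, Df_sym, Df_scal by apply hT.
  rewrite <- Rmult_assoc, sqrt_mult_alt by nra. f_equal.
  replace (a * a) with (Rabs a * Rabs a). apply sqrt_square. apply Rabs_pos.
  rewrite <- Rabs_mult. apply Rabs_right. nra.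
Qed.

Lemma sD_le {H : RHilbert} (T : H -> H) x : BL T -> sD T x <= opnorm T * nrm x.
Proof.
  intros hT. unfold sD. apply sq_le_pos. pose proof (opn_nonneg T hT); pose proof (nrm_pos x); nra.
  rewrite sqrt_sqrt by (apply Df_pos, hT). unfold Df.
  rewrite <- (nrm_sq x). pose proof (inner_pos (T x)). nra.
Qed.

Lemma first_variation {H : RHilbert} (T : H -> H) x0 h : BL T ->
  nrm x0 = 1 -> nrm (T x0) = opnorm T -> inner h x0 = 0 -> inner (T x0) (T h) = 0.
Proof.
  intros hT h1 h2 h3. pose proof (Df_CS T x0 h hT) as c.
  assert (e : Df T x0 x0 = 0).
  { unfold Df. rewrite <- !nrm_sq, h1, h2. ring. }
  rewrite e in c. assert (e2 : Df T x0 h = 0) by nra.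
  unfold Df in e2. rewrite inner_sym, h3 in e2. lra.
Qed.

Lemma orth_zero {H : RHilbert} (x0 : H) : orth x0 vzero.
Proof. unfold orth. apply inner_0_l. Qed.

Lemma orth_scal {H : RHilbert} (x0 : H) a y : orth x0 y -> orth x0 (vscal a y).
Proof. unfold orth. intro h. rewrite inner_scal_l, h. ring. Qed.


Lemma decomp_eq {H : RHilbert} (x x0 : H) (a : R) : x = vadd (vscal a x0) (vsub x (vscal a x0)).
Proof. rewrite vadd_comm, vsub_add. reflexivity. Qed.

Lemma decomp_orth {H : RHilbert} (x x0 : H) : nrm x0 = 1 -> inner (vsub x (vscal (inner x x0) x0)) x0 = 0.
Proof. intro h. inner_simpl. rewrite <- nrm_sq, h. ring. Qed.

Lemma ii_est {H : RHilbert} (T A : H -> H) (x0 x : H) :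
  BL T -> BL A -> nrm x0 = 1 -> nrm (T x0) = opnorm T ->
  let N := opnorm T in let K := opnorm A in let c0 := opnorm_on T (orth x0) in
  let a := inner x x0 in let h := vsub x (vscal a x0) in let nh := nrm h in
  let c := inner (A x0) (T x0) in
  exists X Y,
   inner x x = a * a + nh * nh /\
   inner (T x) (T x) <= a * a * (N * N) + c0 * c0 * (nh * nh) /\
   inner (A x) (T x) = a * a * c + a * X + Y /\
   Rabs X <= 2 * K * N * nh /\ Rabs Y <= K * N * (nh * nh) /\
   inner (A x) (A x) <= K * K * (a * a + nh * nh) /\ 0 <= c0 <= N /\ 0 <= nh /\ 0 <= K.
Proof.
  intros hT hA h1 h2 N K c0 a h nh c.
  assert (ho : inner h x0 = 0) by apply (decomp_orth x x0 h1).
  assert (hx : x = vadd (vscal a x0) h) by apply decomp_eq.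
  assert (hx0 : inner x0 x0 = 1) by (rewrite <- nrm_sq, h1; ring).
  assert (fv : inner (T x0) (T h) = 0) by (apply first_variation; auto).
  assert (hTh : nrm (T h) <= c0 * nh).
  { apply opnorm_bound; auto using orth_zero, orth_scal. }
  assert (hc0 : 0 <= c0) by (apply opnorm_nonneg; auto using orth_zero).
  assert (hc0N : c0 <= N).
  { apply opnorm_le; auto using orth_zero. intros y _ hy. eapply Rle_trans. apply opn_bound; auto.
    pose proof (opn_nonneg T hT). pose proof (nrm_pos y). unfold N. nra. }
  assert (hK : 0 <= K) by (apply opn_nonneg; auto).
  assert (hN : 0 <= N) by (apply opn_nonneg; auto).
  assert (hnh : 0 <= nh) by apply nrm_pos.
  assert (hThN : nrm (T h) <= N * nh) by nra.
  assert (hAh : nrm (A h) <= K * nh) by (apply opn_bound; auto).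
  assert (hAx0 : nrm (A x0) <= K) by (pose proof (opn_bound A x0 hA); fold K in H0; rewrite h1 in H0; lra).
  assert (linT := proj1 hT). assert (linA := proj1 hA).
  assert (eTx : T x = vadd (vscal a (T x0)) (T h)).
  { rewrite hx at 1. rewrite (proj1 linT), (proj2 linT). reflexivity. }
  assert (eAx : A x = vadd (vscal a (A x0)) (A h)).
  { rewrite hx at 1. rewrite (proj1 linA), (proj2 linA). reflexivity. }
  exists (inner (A x0) (T h) + inner (A h) (T x0)), (inner (A h) (T h)).
  split; [|split; [|split; [|split; [|split; [|split]]]]].
  - rewrite hx at 1 2. inner_simpl. rewrite (inner_sym x0 h), ho, hx0. unfold nh. rewrite nrm_sq. ring.
  - rewrite eTx. inner_simpl. rewrite (inner_sym (T h) (T x0)), fv. rewrite <- (nrm_sq (T x0)), h2.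
    rewrite <- (nrm_sq (T h)). fold N. pose proof (nrm_pos (T h)). nra.
  - rewrite eTx, eAx. inner_simpl. fold c. ring.
  - eapply Rle_trans. apply Rabs_triang. pose proof (inner_le (A x0) (T h)). pose proof (inner_le (A h) (T x0)).
    rewrite h2 in H1. fold N in H1. pose proof (nrm_pos (A x0)). pose proof (nrm_pos (A h)). pose proof (nrm_pos (T h)). nra.
  - pose proof (inner_le (A h) (T h)). pose proof (nrm_pos (A h)). pose proof (nrm_pos (T h)). nra.
  - rewrite <- nrm_sq. pose proof (opn_bound A x hA). fold K in H0.
    assert (inner x x = a * a + nh * nh).
    { rewrite hx at 1 2. inner_simpl. rewrite (inner_sym x0 h), ho, hx0. unfold nh. rewrite nrm_sq. ring. }
    rewrite <- nrm_sq in H1. pose proof (nrm_pos (A x)). pose proof (nrm_pos x). nra.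
  - auto.
Qed.
Lemma UE_real (a nh N c0 K c lam X Y Tt At AA g : R) :
  g = N * N - c0 * c0 -> 0 < g ->
  Tt <= a * a * (N * N) + c0 * c0 * (nh * nh) ->
  At = a * a * c + a * X + Y ->
  Rabs X <= 2 * K * N * nh -> Rabs Y <= K * N * (nh * nh) ->
  AA <= K * K * (a * a + nh * nh) -> 0 <= K -> 0 <= N -> 0 <= nh ->
  Rabs lam * (2 * (K * N + Rabs c)) <= g / 2 ->
  Tt + 2 * lam * At + lam * lam * AA <= (N * N + 2 * lam * c + (K * K + 8 * K * K * N * N / g) * (lam * lam)) * (a * a + nh * nh).
Proof.
  intros eg hg hT hA hX hY hAA hK hN hnh hl.
  set (L := Rabs lam). set (al := Rabs a).
  assert (hL : 0 <= L) by apply Rabs_pos. assert (hal : 0 <= al) by apply Rabs_pos.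
  assert (sqL : lam * lam = L * L) by (unfold L; rewrite <- Rabs_mult; rewrite Rabs_right; nra).
  assert (sqa : a * a = al * al) by (unfold al; rewrite <- Rabs_mult; rewrite Rabs_right; nra).
  assert (e1 : lam * a * X <= L * al * (2 * K * N * nh)).
  { replace (lam * a * X) with (lam * a * X) by ring. eapply Rle_trans. apply Rle_abs.
    rewrite !Rabs_mult. fold L al. apply Rmult_le_compat_l. nra. auto. }
  assert (e2 : lam * Y <= L * (K * N * (nh * nh))).
  { eapply Rle_trans. apply Rle_abs. rewrite Rabs_mult. fold L. apply Rmult_le_compat_l; auto. }
  assert (e3 : - (lam * c) <= L * Rabs c).
  { eapply Rle_trans. apply Rle_abs. rewrite Rabs_Ropp, Rabs_mult. fold L. lra. }
  assert (hLd : L = Rabs lam) by reflexivity. rewrite <- hLd in hl.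
  clearbody L al.
  assert (e4 : lam * lam * AA <= lam * lam * (K * K * (a * a + nh * nh))).
  { apply Rmult_le_compat_l. nra. auto. }
  assert (am : 4 * L * al * K * N * nh <= g / 2 * (nh * nh) + 8 * K * K * N * N / g * (lam * lam) * (a * a)).
  { rewrite sqL, sqa.
    apply Rmult_le_reg_l with g; auto.
    replace (g * (g / 2 * (nh * nh) + 8 * K * K * N * N / g * (L * L) * (al * al)))
      with ((g * g * (nh * nh) + 16 * K * K * N * N * (L * L) * (al * al)) / 2) by (field; lra).
    pose proof (pow2_ge_0 (g * nh - 4 * K * N * L * al)). nra. }
  assert (ehh : lam * lam * (K * K + 8 * K * K * N * N / g) * (a * a + nh * nh) >= lam * lam * (K * K) * (a * a + nh * nh) + 8 * K * K * N * N / g * (lam * lam) * (a * a)).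
  { assert (0 <= 8 * K * K * N * N / g) by (unfold Rdiv; apply Rmult_le_pos; [nra| left; apply Rinv_0_lt_compat; auto]).
    assert (0 <= lam * lam) by (pose proof (Rle_0_sqr lam); unfold Rsqr in *; lra).
    set (q := 8 * K * K * N * N / g) in *. assert (0 <= a * a) by (pose proof (Rle_0_sqr a); unfold Rsqr in *; lra).
    assert (0 <= nh * nh) by nra. 
    assert (0 <= lam * lam * q * (nh * nh)) by (apply Rmult_le_pos; [apply Rmult_le_pos|]; auto).
    lra. }
  assert (hl2 : L * (2 * (K * N)) * (nh * nh) + L * (2 * Rabs c) * (nh * nh) <= g / 2 * (nh * nh)).
  { assert (0 <= nh * nh) by (apply Rmult_le_pos; auto).
    replace (L * (2 * (K * N)) * (nh * nh) + L * (2 * Rabs c) * (nh * nh)) with ((L * (2 * (K * N + Rabs c))) * (nh * nh)) by ring.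
    apply Rmult_le_compat_r. auto. lra. }
  assert (f1 : - (lam * c) * (nh * nh) <= L * Rabs c * (nh * nh)) by (apply Rmult_le_compat_r; [apply Rmult_le_pos; auto| lra]).
  assert (f2 : Tt + 2 * lam * At + lam * lam * AA <= a * a * (N * N) + c0 * c0 * (nh * nh) + 2 * lam * (a * a * c) + 2 * (lam * a * X) + 2 * (lam * Y) + lam * lam * (K * K * (a * a + nh * nh))).
  { subst At. lra. }
  subst g. lra.
Qed.

Lemma UE {H : RHilbert} (T A : H -> H) (x0 : H) :
  BL T -> BL A -> nrm x0 = 1 -> nrm (T x0) = opnorm T ->
  opnorm_on T (orth x0) < opnorm T ->
  exists lam0 M, 0 < lam0 /\ forall lam, Rabs lam <= lam0 ->
    opnorm (op_add T (op_scal lam A)) * opnorm (op_add T (op_scal lam A)) <=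
    opnorm T * opnorm T + 2 * lam * inner (A x0) (T x0) + M * (lam * lam).
Proof.
  intros hT hA h1 h2 hgap.
  set (N := opnorm T). set (K := opnorm A). set (c0 := opnorm_on T (orth x0)).
  set (c := inner (A x0) (T x0)). set (g := N * N - c0 * c0).
  assert (hc0 : 0 <= c0) by (apply opnorm_nonneg; auto using orth_zero).
  assert (hK : 0 <= K) by (apply opn_nonneg; auto).
  assert (hg : 0 < g) by (unfold g; fold c0 N in hgap; nra).
  set (lam0 := g / 2 / (2 * (K * N + Rabs c) + 1)).
  assert (hd : 0 < 2 * (K * N + Rabs c) + 1).
  { pose proof (Rabs_pos c). assert (0 <= N) by (apply opn_nonneg; auto). nra. }
  exists lam0, (K * K + 8 * K * K * N * N / g). split.
  { unfold lam0. apply Rdiv_lt_0_compat; lra. }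
  intros lam hlam.
  assert (hl : Rabs lam * (2 * (K * N + Rabs c)) <= g / 2).
  { assert (Rabs lam * (2 * (K * N + Rabs c) + 1) <= g / 2).
    { apply Rle_trans with (lam0 * (2 * (K * N + Rabs c) + 1)). apply Rmult_le_compat_r; lra.
      unfold lam0. right. field. lra. }
    pose proof (Rabs_pos lam). nra. }
  set (R0 := N * N + 2 * lam * c + (K * K + 8 * K * K * N * N / g) * (lam * lam)).
  assert (hR0 : 0 <= R0).
  { unfold R0. assert (0 <= (K * K + 8 * K * K * N * N / g) * (lam * lam)).
    { apply Rmult_le_pos; [|nra]. assert (0 <= 8 * K * K * N * N / g).
      { unfold Rdiv. apply Rmult_le_pos; [nra|left; apply Rinv_0_lt_compat; auto]. } nra. }
    assert (- (2 * lam * c) <= 2 * Rabs lam * Rabs c).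
    { pose proof (Rle_abs (- (lam * c))) as hh. rewrite Rabs_Ropp, Rabs_mult in hh. lra. }
    assert (0 <= N) by (apply opn_nonneg; auto).
    assert (Rabs lam * (2 * Rabs c) <= g / 2).
    { assert (0 <= Rabs lam * (K * N)) by (apply Rmult_le_pos; [apply Rabs_pos| apply Rmult_le_pos; auto]). lra. }
    unfold g in H3. nra. }
  assert (hB : BL (op_add T (op_scal lam A))) by (apply BL_add; auto; apply BL_scal; auto).
  assert (hle : opnorm (op_add T (op_scal lam A)) <= sqrt R0).
  { apply opn_le; auto. intros x hx.
    destruct (ii_est T A x0 x hT hA h1 h2) as [X [Y [e1 [e2 [e3 [e4 [e5 [e6 [e7 [e8 e9]]]]]]]]]].
    fold N K c0 c in e1, e2, e3, e4, e5, e6, e7.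
    apply nrm_le_sq. apply sqrt_pos. rewrite sqrt_sqrt by auto.
    unfold op_add, op_scal. inner_simpl. rewrite (inner_sym (T x) (A x)).
    pose proof (UE_real (inner x x0) (nrm (vsub x (vscal (inner x x0) x0))) N c0 K c lam X Y
      (inner (T x) (T x)) (inner (A x) (T x)) (inner (A x) (A x)) g eq_refl hg e2 e3 e4 e5 e6 e9 ltac:(unfold N; apply opn_nonneg; auto) e8 hl) as hu.
    rewrite <- e1 in hu. fold R0 in hu.
    assert (inner x x <= 1) by (rewrite <- nrm_sq; pose proof (nrm_pos x); nra).
    assert (R0 * inner x x <= R0) by (pose proof (inner_pos x); nra).
    lra. }
  assert (0 <= opnorm (op_add T (op_scal lam A))) by (apply opn_nonneg; auto).
  pose proof (sqrt_sqrt R0 hR0). fold R0. nra.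
Qed.

Lemma opT_x0 {H : RHilbert} (T A : H -> H) (x0 : H) lam :
  BL T -> BL A -> nrm x0 = 1 -> nrm (T x0) = opnorm T ->
  opnorm T * opnorm T + 2 * lam * inner (A x0) (T x0) + lam * lam * inner (A x0) (A x0)
  <= opnorm (op_add T (op_scal lam A)) * opnorm (op_add T (op_scal lam A)).
Proof.
  intros hT hA h1 h2.
  assert (hB : BL (op_add T (op_scal lam A))) by (apply BL_add; auto; apply BL_scal; auto).
  pose proof (opn_ge _ x0 hB ltac:(lra)) as h.
  pose proof (nrm_pos (op_add T (op_scal lam A) x0)).
  assert (e : nrm (op_add T (op_scal lam A) x0) * nrm (op_add T (op_scal lam A) x0) =
     opnorm T * opnorm T + 2 * lam * inner (A x0) (T x0) + lam * lam * inner (A x0) (A x0)).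
  { rewrite nrm_sq. unfold op_add, op_scal. inner_simpl. rewrite <- (nrm_sq (T x0)), h2.
    rewrite (inner_sym (T x0) (A x0)). ring. }
  rewrite <- e. nra.
Qed.

Lemma ii_BJ {H : RHilbert} (T A : H -> H) (x0 : H) :
  BL T -> BL A -> nrm x0 = 1 -> nrm (T x0) = opnorm T ->
  opnorm_on T (orth x0) < opnorm T ->
  (BJ_orth T A <-> inner (A x0) (T x0) = 0).
Proof.
  intros hT hA h1 h2 hgap. split.
  - intros hbj. destruct (UE T A x0 hT hA h1 h2 hgap) as [lam0 [M [hl0 hM]]].
    set (c := inner (A x0) (T x0)) in *.
    destruct (Req_dec c 0) as [e|e]; auto. exfalso.
    set (t := Rmin lam0 (Rabs c / (Rabs M + 1))).
    assert (hc : 0 < Rabs c) by (apply Rabs_pos_lt; auto).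
    assert (ht : 0 < t). { unfold t. apply Rmin_pos; auto. apply Rdiv_lt_0_compat; auto. pose proof (Rabs_pos M). lra. }
    assert (hMt : M * t < 2 * Rabs c).
    { assert (t <= Rabs c / (Rabs M + 1)) by apply Rmin_r.
      assert (Rabs M * t <= Rabs c).
      { pose proof (Rabs_pos M). apply Rle_trans with (Rabs M * (Rabs c / (Rabs M + 1))). apply Rmult_le_compat_l; auto.
        apply Rle_trans with ((Rabs M + 1) * (Rabs c / (Rabs M + 1))). apply Rmult_le_compat_r. unfold Rdiv.
        apply Rmult_le_pos; [lra|left; apply Rinv_0_lt_compat; lra]. lra. right. field. lra. }
      pose proof (Rle_abs M). nra. }
    set (lam := if Rlt_dec 0 c then - t else t).
    assert (hlam : Rabs lam <= lam0).
    { unfold lam. assert (t <= lam0) by apply Rmin_l. destruct (Rlt_dec 0 c); [rewrite Rabs_Ropp|]; rewrite Rabs_right; lra. }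
    assert (hsign : 2 * lam * c = - 2 * t * Rabs c).
    { unfold lam. destruct (Rlt_dec 0 c). rewrite Rabs_right; lra. rewrite Rabs_left; [ring|]. lra. }
    assert (hsq : lam * lam = t * t) by (unfold lam; destruct (Rlt_dec 0 c); ring).
    specialize (hM lam hlam). rewrite hsign, hsq in hM.
    specialize (hbj lam). pose proof (opn_nonneg T hT).
    assert (M * (t * t) < 2 * t * Rabs c) by nra.
    assert (opnorm (op_add T (op_scal lam A)) * opnorm (op_add T (op_scal lam A)) < opnorm T * opnorm T) by lra.
    nra.
  - intros e lam. pose proof (opT_x0 T A x0 lam hT hA h1 h2). rewrite e in H0.
    pose proof (inner_pos (A x0)). pose proof (opn_nonneg T hT).
    assert (hB : BL (op_add T (op_scal lam A))) by (apply BL_add; auto; apply BL_scal; auto).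
    pose proof (opn_nonneg _ hB). apply Rle_ge. apply sq_le_pos; auto. nra.
Qed.

Lemma ii_conv {H : RHilbert} (T A : H -> H) (x0 : H) (xs : nat -> H) :
  BL T -> BL A -> nrm x0 = 1 -> nrm (T x0) = opnorm T ->
  opnorm_on T (orth x0) < opnorm T -> norming_seq T xs ->
  Un_cv (fun n => inner (A (xs n)) (T (xs n))) (inner (A x0) (T x0)).
Proof.
  intros hT hA h1 h2 hgap [hu hcv] eps heps.
  remember (opnorm T) as N. remember (opnorm A) as K. remember (opnorm_on T (orth x0)) as c0.
  remember (inner (A x0) (T x0)) as c. remember (N * N - c0 * c0) as g.
  assert (hc0 : 0 <= c0) by (subst c0; apply opnorm_nonneg; auto using orth_zero).
  assert (hK : 0 <= K) by (subst K; apply opn_nonneg; auto).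
  assert (hN : 0 <= N) by (subst N; apply opn_nonneg; auto).
  assert (hg : 0 < g) by (subst g; nra).
  remember (Rabs c + 3 * K * N + 1) as C.
  assert (hKN : 0 <= K * N) by (apply Rmult_le_pos; auto).
  assert (hC : 0 < C) by (subst C; pose proof (Rabs_pos c); lra).
  remember (Rmin 1 (eps / C / 2)) as eta.
  assert (heta : 0 < eta) by (subst eta; apply Rmin_pos; [lra|]; apply Rdiv_lt_0_compat; [apply Rdiv_lt_0_compat|]; lra).
  assert (heta1 : eta <= 1) by (subst eta; apply Rmin_l).
  assert (heta2 : eta * C < eps).
  { assert (eta <= eps / C / 2) by (subst eta; apply Rmin_r).
    apply Rle_lt_trans with (eps / C / 2 * C). apply Rmult_le_compat_r; lra.
    replace (eps / C / 2 * C) with (eps / 2) by (field; lra). lra. }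
  remember (Rmin 1 (g * eta * eta / (2 * N + 1))) as del.
  assert (hdel : 0 < del).
  { subst del. apply Rmin_pos; [lra|]. apply Rdiv_lt_0_compat; [|lra]. apply Rmult_lt_0_compat; [apply Rmult_lt_0_compat|]; auto. }
  assert (hdel2 : del * (2 * N + 1) <= g * eta * eta).
  { assert (del <= g * eta * eta / (2 * N + 1)) by (subst del; apply Rmin_r).
    apply Rle_trans with (g * eta * eta / (2 * N + 1) * (2 * N + 1)). apply Rmult_le_compat_r; lra.
    right. field. lra. }
  assert (hdel1 : del <= 1) by (subst del; apply Rmin_l).
  destruct (hcv del hdel) as [n0 hn0]. exists n0. intros n hn. specialize (hn0 n hn).
  unfold R_dist in *.
  destruct (ii_est T A x0 (xs n) hT hA h1 (eq_trans h2 HeqN)) as [X [Y [e1 [e2 [e3 [e4 [e5 [e6 [e7 [e8 e9]]]]]]]]]].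
  rewrite <- HeqN, <- HeqK, <- Heqc0, <- Heqc in *.
  set (a := inner (xs n) x0) in *. set (nh := nrm (vsub (xs n) (vscal a x0))) in *.
  clearbody a nh.
  rewrite <- nrm_sq, hu in e1.
  set (t := nrm (T (xs n))) in *.
  assert (ht : t <= N) by (unfold t; subst N; rewrite <- (Rmult_1_r (opnorm T)), <- (hu n); apply opn_bound; auto).
  assert (ht0 : 0 <= t) by apply nrm_pos.
  rewrite <- nrm_sq in e2. fold t in e2. clearbody t.
  assert (hNt : N * N - t * t <= g * eta * eta).
  { apply Rabs_def2 in hn0. destruct hn0. nra. }
  assert (hnh2 : nh * nh <= eta * eta).
  { assert (g * (nh * nh) <= g * (eta * eta)) by (subst g; nra).
    apply Rmult_le_reg_l with g; auto. }
  assert (hnh : nh <= eta) by (apply sq_le_pos; lra).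
  assert (ha : Rabs a <= 1) by (apply abs_sq_le; nra).
  rewrite e3.
  replace (a * a * c + a * X + Y - c) with (- (nh * nh) * c + a * X + Y) by (replace (a * a) with (1 - nh * nh) by lra; ring).
  eapply Rle_lt_trans; [apply Rabs_triang|]. eapply Rle_lt_trans; [apply Rplus_le_compat_r; apply Rabs_triang|].
  rewrite !Rabs_mult. rewrite Rabs_Ropp, (Rabs_right (nh * nh)) by nra.
  assert (Rabs a * Rabs X <= 2 * K * N * nh).
  { pose proof (Rabs_pos a). pose proof (Rabs_pos X). nra. }
  assert (nh * nh * Rabs c <= nh * Rabs c) by (apply Rmult_le_compat_r; [apply Rabs_pos|nra]).
  assert (K * N * (nh * nh) <= K * N * nh) by (apply Rmult_le_compat_l; [auto|nra]).
  assert (nh * C <= eta * C) by nra.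
  subst C. nra.
Qed.

Lemma opn_scal_le {H : RHilbert} (B : H -> H) k : BL B -> 0 < k -> opnorm B <= k -> opnorm (op_scal (/ k) B) <= 1.
Proof.
  intros hB hk hle. apply opn_le. apply BL_scal; auto. intros x hx. unfold op_scal.
  rewrite nrm_scal, Rabs_right by (left; apply Rinv_0_lt_compat; auto).
  pose proof (opn_bound B x hB). pose proof (nrm_pos x). pose proof (opn_nonneg B hB).
  apply Rmult_le_reg_l with k; auto. rewrite <- Rmult_assoc, Rinv_r by lra. nra.
Qed.

Lemma sf_bound {H : RHilbert} (T : H -> H) (g : (H -> H) -> R) (B : H -> H) :
  support_functional T g -> BL B -> Rabs (g B) <= opnorm B.
Proof.
  intros [gadd [gscal [glub gT]]] hB.
  assert (hk : forall k, 0 < k -> opnorm B <= k -> Rabs (g B) <= k).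
  { intros k hk hle. assert (h1 : Rabs (g (op_scal (/ k) B)) <= 1).
    { apply (proj1 glub). exists (op_scal (/ k) B). split. apply BL_scal; auto. split; auto. apply opn_scal_le; auto. }
    rewrite gscal, Rabs_mult, Rabs_right in h1 by (auto; left; apply Rinv_0_lt_compat; auto).
    apply Rmult_le_reg_l with (/ k). apply Rinv_0_lt_compat; auto. rewrite Rinv_l by lra. auto. }
  pose proof (opn_nonneg B hB).
  destruct (Rle_or_lt (Rabs (g B)) (opnorm B)) as [h|h]; auto. exfalso.
  pose proof (hk ((Rabs (g B) + opnorm B) / 2) ltac:(lra) ltac:(lra)). lra.
Qed.

Lemma sf_lin {H : RHilbert} (T : H -> H) (g : (H -> H) -> R) (A : H -> H) lam :
  support_functional T g -> BL T -> BL A -> g (op_add T (op_scal lam A)) = opnorm T + lam * g A.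
Proof.
  intros [gadd [gscal [glub gT]]] hT hA. rewrite gadd, gscal, gT; auto. apply BL_scal; auto.
Qed.

Definition vfun {H : RHilbert} (T : H -> H) (x0 : H) : (H -> H) -> R :=
  fun B => inner (B x0) (T x0) / opnorm T.

Lemma vfun_support {H : RHilbert} (T : H -> H) (x0 : H) :
  BL T -> nrm x0 = 1 -> nrm (T x0) = opnorm T -> 0 < opnorm T -> support_functional T (vfun T x0).
Proof.
  intros hT h1 h2 hN. unfold vfun. split; [|split; [|split]].
  - intros A B _ _. unfold op_add. inner_simpl. field. lra.
  - intros a A _. unfold op_scal. inner_simpl. field. lra.
  - split.
    + intros r [B [hB [hle ->]]]. unfold Rdiv. rewrite Rabs_mult, Rabs_inv, (Rabs_right (opnorm T)) by lra.
      apply Rmult_le_reg_r with (opnorm T); auto. rewrite Rmult_assoc, Rinv_l, Rmult_1_l, Rmult_1_r by lra.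
      eapply Rle_trans. apply inner_le. rewrite h2. pose proof (opn_bound B x0 hB). rewrite h1 in H0.
      pose proof (nrm_pos (B x0)). nra.
    + intros b hb. apply hb. exists (op_scal (/ opnorm T) T). split. apply BL_scal; auto.
      split. apply opn_scal_le; auto; lra.
      unfold op_scal. inner_simpl. rewrite <- nrm_sq, h2. rewrite Rabs_right. field. lra.
      replace (/ opnorm T * (opnorm T * opnorm T) / opnorm T) with 1 by (field; lra). lra.
  - rewrite <- nrm_sq, h2. field. lra.
Qed.

Lemma ii_unique {H : RHilbert} (T A : H -> H) (x0 : H) (g : (H -> H) -> R) :
  BL T -> BL A -> nrm x0 = 1 -> nrm (T x0) = opnorm T -> 0 < opnorm T ->
  opnorm_on T (orth x0) < opnorm T -> support_functional T g -> g A = vfun T x0 A.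
Proof.
  intros hT hA h1 h2 hN hgap hg.
  destruct (UE T A x0 hT hA h1 h2 hgap) as [lam0 [M [hl0 hM]]].
  set (N := opnorm T) in *. set (c := inner (A x0) (T x0)) in *. set (G := g A).
  assert (key : forall lam, Rabs lam <= lam0 -> 0 <= N + lam * G ->
            2 * lam * (N * G - c) <= Rabs M * (lam * lam)).
  { intros lam hl hp.
    assert (hB : BL (op_add T (op_scal lam A))) by (apply BL_add; auto; apply BL_scal; auto).
    pose proof (sf_bound T g _ hg hB) as hb. rewrite (sf_lin T g A lam hg hT hA) in hb. fold N G in hb.
    specialize (hM lam hl). pose proof (Rle_abs (N + lam * G)).
    assert ((N + lam * G) * (N + lam * G) <= N * N + 2 * lam * c + M * (lam * lam)).
    { pose proof (opn_nonneg _ hB). eapply Rle_trans; [|apply hM]. nra. }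
    pose proof (Rle_abs M). assert (0 <= lam * lam) by nra. nra. }
  unfold vfun. fold N c. fold G. apply Rmult_eq_reg_r with N; [|lra].
  unfold Rdiv. rewrite Rmult_assoc, Rinv_l, Rmult_1_r by lra.
  set (D := N * G - c).
  assert (hsmall : forall t, 0 < t -> t <= lam0 -> t * (Rabs G + 1) <= N -> Rabs D <= Rabs M * t / 2).
  { intros t ht1 ht2 ht3. apply Rabs_le. split.
    - pose proof (key (- t)) as k. rewrite Rabs_Ropp, Rabs_right in k by lra.
      assert (0 <= N + - t * G) by (pose proof (Rle_abs G); pose proof (Rle_abs (-G)); rewrite Rabs_Ropp in *; nra).
      specialize (k ht2 H0). unfold D. nra.
    - pose proof (key t) as k. rewrite Rabs_right in k by lra.
      assert (0 <= N + t * G) by (pose proof (Rle_abs G); pose proof (Rle_abs (-G)); rewrite Rabs_Ropp in *; nra).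
      specialize (k ht2 H0). unfold D. nra. }
  destruct (Req_dec D 0) as [e|e]. unfold D in e. rewrite Rmult_comm. lra.
  exfalso. assert (hD : 0 < Rabs D) by (apply Rabs_pos_lt; auto).
  set (t := Rmin (Rmin lam0 (N / (Rabs G + 1))) (Rabs D / (Rabs M + 1))).
  assert (hG1 : 0 < Rabs G + 1) by (pose proof (Rabs_pos G); lra).
  assert (hM1 : 0 < Rabs M + 1) by (pose proof (Rabs_pos M); lra).
  assert (ht : 0 < t) by (unfold t; repeat apply Rmin_pos; auto; apply Rdiv_lt_0_compat; auto).
  assert (t <= lam0) by (unfold t; eapply Rle_trans; [apply Rmin_l|apply Rmin_l]).
  assert (t <= N / (Rabs G + 1)) by (unfold t; eapply Rle_trans; [apply Rmin_l|apply Rmin_r]).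
  assert (t <= Rabs D / (Rabs M + 1)) by (unfold t; apply Rmin_r).
  assert (t * (Rabs G + 1) <= N).
  { apply Rle_trans with (N / (Rabs G + 1) * (Rabs G + 1)). apply Rmult_le_compat_r; lra. right; field; lra. }
  assert (t * (Rabs M + 1) <= Rabs D).
  { apply Rle_trans with (Rabs D / (Rabs M + 1) * (Rabs M + 1)). apply Rmult_le_compat_r; lra. right; field; lra. }
  specialize (hsmall t ht H0 H3). pose proof (Rabs_pos M). nra.
Qed.

Lemma opnorm_pos {H : RHilbert} (T : H -> H) : BL T -> ~ (forall x, T x = vzero) -> 0 < opnorm T.
Proof.
  intros hT hne. destruct (Rle_or_lt (opnorm T) 0) as [h|h]; auto. exfalso. apply hne. intro x.
  apply nrm_eq0. pose proof (opn_bound T x hT). pose proof (nrm_pos x). pose proof (nrm_pos (T x)).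
  pose proof (opn_nonneg T hT). nra.
Qed.

Lemma phi_ge (phi : nat -> nat) : (forall n, (phi n < phi (S n))%nat) -> forall n, (n <= phi n)%nat.
Proof. intros h n. induction n. lia. specialize (h n). lia. Qed.

Lemma cv_subseq (u : nat -> R) L (phi : nat -> nat) :
  (forall n, (phi n < phi (S n))%nat) -> Un_cv u L -> Un_cv (fun n => u (phi n)) L.
Proof.
  intros hp hu eps he. destruct (hu eps he) as [N hN]. exists N. intros n hn. apply hN.
  pose proof (phi_ge phi hp n). lia.
Qed.

Lemma cv_const (c : R) : Un_cv (fun _ => c) c.
Proof. intros eps he. exists O. intros. unfold R_dist. rewrite Rminus_diag, Rabs_R0. lra. Qed.

Definition cond2P {H : RHilbert} (T : H -> H) : Prop :=
  exists x0 : H, nrm x0 = 1 /\ (forall x, M_set T x <-> (x = x0 \/ x = vopp x0)) /\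
      opnorm_on T (orth x0) < opnorm T.

Definition cond3P {H : RHilbert} (T : H -> H) : Prop :=
  forall A : H -> H, BL A ->
      (BJ_orth T A <->
       (forall xs, norming_seq T xs ->
        forall l, subseq_limit (fun n => inner (A (xs n)) (T (xs n))) l -> l = 0)).

Lemma ii_to_1 {H : RHilbert} (T : H -> H) : BL T -> ~ (forall x, T x = vzero) ->
  cond2P T -> smooth_point T.
Proof.
  intros hT hne [x0 [h1 [hM hgap]]].
  assert (h2 : nrm (T x0) = opnorm T) by (apply (proj2 (hM x0)); auto).
  pose proof (opnorm_pos T hT hne).
  exists (vfun T x0). split. apply vfun_support; auto.
  intros g hg A hA. apply ii_unique; auto.
Qed.

Lemma ii_to_3 {H : RHilbert} (T : H -> H) : BL T -> ~ (forall x, T x = vzero) ->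
  cond2P T -> cond3P T.
Proof.
  intros hT hne [x0 [h1 [hM hgap]]] A hA.
  assert (h2 : nrm (T x0) = opnorm T) by (apply (proj2 (hM x0)); auto).
  rewrite (ii_BJ T A x0 hT hA h1 h2 hgap). split.
  - intros e xs hxs l [phi [hphi hcv]].
    pose proof (cv_subseq _ _ phi hphi (ii_conv T A x0 xs hT hA h1 h2 hgap hxs)) as h.
    rewrite e in h. eapply UL_sequence; eauto.
  - intros h. apply (h (fun _ => x0)).
    + split. auto. rewrite h2. apply cv_const.
    + exists (fun n => n). split. auto. apply cv_const.
Qed.


Lemma ultra_exists : exists U : (nat -> Prop) -> Prop,
  (forall S1 S2, U S1 -> U S2 -> U (fun n => S1 n /\ S2 n)) /\
  (forall S1 S2 : nat -> Prop, (forall n, S1 n -> S2 n) -> U S1 -> U S2) /\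
  ~ U (fun _ => False) /\
  (forall S, U S \/ U (fun n => ~ S n)) /\
  (forall N, U (fun n => (N <= n)%nat)).
Proof.
assert (PF : filter.ProperFilter filter.eventually) by exact _.
destruct (filter.ultraFilterLemma PF) as [G [GU FG]].
assert (GF : filter.Filter G) by (destruct GU as [GP _]; exact _).
exists G; split; [|split; [|split; [|split]]].
- intros S1 S2 h1 h2. exact (filter.filterI h1 h2).
- intros S1 S2 h h1. exact (filter.filterS h h1).
- intros h. apply (filter.filter_not_empty G). exact h.
- intros S. exact (filter.in_ultra_setVsetC S GU).
- intros N. apply FG. exists N. exact I. intros n Hn. simpl in Hn. destruct (@ssrnat.leP N n); [assumption|discriminate].
Qed.

Lemma abs_le_inv x M : Rabs x <= M -> - M <= x <= M.
Proof. intro h. pose proof (Rle_abs x). pose proof (Rle_abs (- x)) as h2. rewrite Rabs_Ropp in h2. lra. Qed.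

Definition isU (U : (nat -> Prop) -> Prop) : Prop :=
  (forall S1 S2, U S1 -> U S2 -> U (fun n => S1 n /\ S2 n)) /\
  (forall S1 S2 : nat -> Prop, (forall n, S1 n -> S2 n) -> U S1 -> U S2) /\
  ~ U (fun _ => False) /\
  (forall S, U S \/ U (fun n => ~ S n)) /\
  (forall N, U (fun n => (N <= n)%nat)).

Definition Ulim (U : (nat -> Prop) -> Prop) (a : nat -> R) (l : R) : Prop :=
  forall eps, eps > 0 -> U (fun n => Rabs (a n - l) < eps).

Lemma U_ne U S : isU U -> U S -> exists n, S n.
Proof.
  intros [hI [hM [h0 _]]] hS. apply NNPP. intro hn. apply h0. apply (hM S); auto.
  intros n h. apply hn. eauto.
Qed.

Lemma U_all U (S : nat -> Prop) : isU U -> (forall n, S n) -> U S.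
Proof. intros [hI [hM [h0 [hU hN]]]] h. apply (hM (fun n => (0 <= n)%nat)); auto. Qed.

Lemma Ulim_uniq U a l1 l2 : isU U -> Ulim U a l1 -> Ulim U a l2 -> l1 = l2.
Proof.
  intros hU h1 h2. apply NNPP. intro hne.
  assert (he : Rabs (l1 - l2) / 2 > 0) by (apply Rdiv_lt_0_compat; [apply Rabs_pos_lt; lra|lra]).
  destruct (U_ne U _ hU ((proj1 hU) _ _ (h1 _ he) (h2 _ he))) as [n [e1 e2]].
  assert (Rabs (l1 - l2) <= Rabs (a n - l1) + Rabs (a n - l2)).
  { replace (l1 - l2) with (- (a n - l1) + (a n - l2)) by ring. eapply Rle_trans. apply Rabs_triang.
    rewrite Rabs_Ropp. lra. }
  lra.
Qed.

Lemma Ulim_ex U a M : isU U -> (forall n, Rabs (a n) <= M) -> exists l, Ulim U a l.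
Proof.
  intros hU hb. pose proof hU as [hI [hM [h0 [hUl hN]]]].
  set (S := fun r => U (fun n => r <= a n)).
  assert (hbd : bound S).
  { exists M. intros r hr. destruct (Rle_or_lt r M) as [h|h]; auto. exfalso.
    apply h0. apply (hM (fun n => r <= a n)); [intros n hn; specialize (hb n); apply abs_le_inv in hb; lra| exact hr]. }
  assert (hne : exists r, S r).
  { exists (- M). unfold S. apply U_all; auto. intro n. specialize (hb n). apply abs_le_inv in hb. lra. }
  destruct (completeness S hbd hne) as [l [hl1 hl2]].
  exists l. intros eps he.
  assert (A1 : U (fun n => l - eps / 2 < a n)).
  { destruct (classic (exists r, S r /\ l - eps / 2 < r)) as [[r [hr1 hr2]]|hn].
    - apply (hM (fun n => r <= a n)); [intros n hn; lra| exact hr1].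
    - exfalso. assert (l <= l - eps / 2); [|lra]. apply hl2. intros r hr.
      destruct (Rle_or_lt r (l - eps / 2)); auto. exfalso; apply hn; eauto. }
  assert (A2 : U (fun n => a n < l + eps / 2)).
  { destruct (hUl (fun n => l + eps / 2 <= a n)) as [h|h].
    - exfalso. assert (l + eps / 2 <= l) by (apply hl1; exact h). lra.
    - apply (hM (fun n => ~ (l + eps / 2 <= a n))); [intros n hn; apply Rnot_le_lt; exact hn| exact h]. }
  clearbody S. apply (hM (fun n => l - eps / 2 < a n /\ a n < l + eps / 2)). intros n [u v]. apply Rabs_def1; lra. apply hI; auto.
Qed.

Lemma Ulim_add U a b la lb : isU U -> Ulim U a la -> Ulim U b lb -> Ulim U (fun n => a n + b n) (la + lb).
Proof.
  intros hU ha hb eps he. pose proof hU as [hI [hM _]].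
  apply (hM (fun n => Rabs (a n - la) < eps / 2 /\ Rabs (b n - lb) < eps / 2)).
  - intros n [u v]. replace (a n + b n - (la + lb)) with ((a n - la) + (b n - lb)) by ring.
    eapply Rle_lt_trans; [apply Rabs_triang|lra].
  - apply hI; [apply ha|apply hb]; lra.
Qed.

Lemma Ulim_scal U a la c : isU U -> Ulim U a la -> Ulim U (fun n => c * a n) (c * la).
Proof.
  intros hU ha eps he. pose proof hU as [hI [hM _]]. destruct (Req_dec c 0) as [e|e].
  - subst. apply U_all; auto. intro n. replace (0 * a n - 0 * la) with 0 by ring. rewrite Rabs_R0. lra.
  - assert (hc : 0 < Rabs c) by (apply Rabs_pos_lt; auto).
    apply (hM (fun n => Rabs (a n - la) < eps / Rabs c)).
    + intros n hn. replace (c * a n - c * la) with (c * (a n - la)) by ring.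
      rewrite Rabs_mult. apply Rmult_lt_reg_l with (/ Rabs c); [apply Rinv_0_lt_compat; auto|].
      rewrite <- Rmult_assoc, Rinv_l, Rmult_1_l by lra. rewrite Rmult_comm. exact hn.
    + apply ha. apply Rdiv_lt_0_compat; lra.
Qed.

Lemma Ulim_cv U a L : isU U -> Un_cv a L -> Ulim U a L.
Proof.
  intros hU hcv eps he. pose proof hU as [hI [hM [_ [_ hN]]]]. destruct (hcv eps he) as [n0 hn0].
  apply (hM (fun n => (n0 <= n)%nat)). intros n hn. apply hn0. lia. apply hN.
Qed.

Lemma Ulim_bound U a l M : isU U -> (forall n, Rabs (a n) <= M) -> Ulim U a l -> Rabs l <= M.
Proof.
  intros hU hb hl. destruct (Rle_or_lt (Rabs l) M) as [h|h]; auto. exfalso.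
  destruct (U_ne U _ hU (hl (Rabs l - M) ltac:(lra))) as [n hn].
  specialize (hb n). assert (Rabs l <= Rabs (a n) + Rabs (a n - l)).
  { replace l with (a n - (a n - l)) at 1 by ring. eapply Rle_trans. apply Rabs_triang. rewrite Rabs_Ropp. lra. }
  lra.
Qed.

Definition ulim (U : (nat -> Prop) -> Prop) (a : nat -> R) : R := epsilon (inhabits 0) (Ulim U a).

Lemma ulim_spec U a M : isU U -> (forall n, Rabs (a n) <= M) -> Ulim U a (ulim U a).
Proof. intros hU hb. unfold ulim. apply epsilon_spec. eapply Ulim_ex; eauto. Qed.

Lemma ulim_eq U a M l : isU U -> (forall n, Rabs (a n) <= M) -> Ulim U a l -> ulim U a = l.
Proof. intros hU hb hl. eapply Ulim_uniq; eauto. eapply ulim_spec; eauto. Qed.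

Lemma Ulim_ext U a b l : isU U -> (forall n, a n = b n) -> Ulim U a l -> Ulim U b l.
Proof.
  intros hU he ha eps heps. pose proof hU as [hI [hM _]].
  apply (hM (fun n => Rabs (a n - l) < eps)). intros n h. rewrite <- he. auto. apply ha; auto.
Qed.

Lemma norming_le {H : RHilbert} (T : H -> H) w n : BL T -> norming_seq T w -> nrm (T (w n)) <= opnorm T.
Proof. intros hT [hu _]. rewrite <- (Rmult_1_r (opnorm T)), <- (hu n). apply opn_bound; auto. Qed.

Lemma seq_bound {H : RHilbert} (T B : H -> H) w : BL T -> BL B -> norming_seq T w ->
  forall n, Rabs (inner (B (w n)) (T (w n))) <= opnorm B * opnorm T.
Proof.
  intros hT hB hw n. eapply Rle_trans. apply inner_le. pose proof (opn_bound B (w n) hB).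
  rewrite (proj1 hw n) in H0. pose proof (norming_le T w n hT hw). pose proof (nrm_pos (B (w n))).
  pose proof (nrm_pos (T (w n))). pose proof (opn_nonneg B hB). nra.
Qed.

Lemma norming_sq {H : RHilbert} (T : H -> H) w : norming_seq T w ->
  Un_cv (fun n => inner (T (w n)) (T (w n))) (opnorm T * opnorm T).
Proof.
  intros [_ hcv]. pose proof (CV_mult _ _ _ _ hcv hcv). intros eps he. destruct (H0 eps he) as [n0 hn].
  exists n0. intros n hn2. rewrite <- nrm_sq. apply hn; auto.
Qed.

Definition ufun {H : RHilbert} (U : (nat -> Prop) -> Prop) (T : H -> H) (w : nat -> H) : (H -> H) -> R :=
  fun B => ulim U (fun n => inner (B (w n)) (T (w n))) / opnorm T.

Lemma ufun_support {H : RHilbert} U (T : H -> H) w : isU U -> BL T -> 0 < opnorm T -> norming_seq T w ->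
  support_functional T (ufun U T w).
Proof.
  intros hU hT hN hw. unfold support_functional, ufun.
  assert (sp : forall B, BL B -> Ulim U (fun n => inner (B (w n)) (T (w n))) (ulim U (fun n => inner (B (w n)) (T (w n))))).
  { intros B hB. eapply ulim_spec; eauto. apply seq_bound; auto. }
  split; [|split; [|split]].
  - intros A B hA hB. rewrite (ulim_eq U _ (opnorm (op_add A B) * opnorm T) (ulim U (fun n => inner (A (w n)) (T (w n))) + ulim U (fun n => inner (B (w n)) (T (w n))))); auto.
    field. lra. apply seq_bound; auto. apply BL_add; auto.
    eapply Ulim_ext; [auto| |apply Ulim_add; auto]. intro n. unfold op_add. inner_simpl. reflexivity.
  - intros a A hA. rewrite (ulim_eq U _ (opnorm (op_scal a A) * opnorm T) (a * ulim U (fun n => inner (A (w n)) (T (w n))))); auto.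
    field. lra. apply seq_bound; auto. apply BL_scal; auto.
    eapply Ulim_ext; [auto| |apply Ulim_scal; auto]. intro n. unfold op_scal. inner_simpl. reflexivity.
  - split.
    + intros r [B [hB [hle ->]]]. unfold Rdiv. rewrite Rabs_mult, Rabs_inv, (Rabs_right (opnorm T)) by lra.
      apply Rmult_le_reg_r with (opnorm T); auto. rewrite Rmult_assoc, Rinv_l, Rmult_1_l, Rmult_1_r by lra.
      eapply Ulim_bound; eauto. intro n. eapply Rle_trans. apply seq_bound; auto.
      pose proof (opn_nonneg B hB). nra.
    + intros b hb. apply hb. exists (op_scal (/ opnorm T) T). split. apply BL_scal; auto.
      split. apply opn_scal_le; auto; lra.
      rewrite (ulim_eq U _ (opnorm (op_scal (/ opnorm T) T) * opnorm T) (/ opnorm T * (opnorm T * opnorm T))); auto.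
      replace (/ opnorm T * (opnorm T * opnorm T) / opnorm T) with 1 by (field; lra). rewrite Rabs_R1; reflexivity.
      apply seq_bound; auto. apply BL_scal; auto.
      eapply Ulim_ext; [auto| |apply Ulim_scal; auto; apply Ulim_cv; auto; apply norming_sq; auto].
      intro n. unfold op_scal. inner_simpl. reflexivity.
      all: try assumption.
  - rewrite (ulim_eq U _ (opnorm T * opnorm T) (opnorm T * opnorm T)); auto. field. lra.
    apply seq_bound; auto. apply Ulim_cv; auto. apply norming_sq; auto.
Qed.

Definition sep {H : RHilbert} (T A : H -> H) (u v : nat -> H) (L : R) : Prop :=
  BL A /\ norming_seq T u /\ norming_seq T v /\
  Un_cv (fun n => inner (A (u n)) (T (u n))) 0 /\
  Un_cv (fun n => inner (A (v n)) (T (v n))) L /\ L <> 0.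

Lemma sep_not1 {H : RHilbert} (T A : H -> H) u v L : BL T -> 0 < opnorm T -> sep T A u v L -> ~ smooth_point T.
Proof.
  intros hT hN [hA [hu [hv [cu [cv hL]]]]] [f [hf huniq]].
  destruct ultra_exists as [U hU]. fold (isU U) in hU.
  pose proof (huniq _ (ufun_support U T u hU hT hN hu) A hA) as e1.
  pose proof (huniq _ (ufun_support U T v hU hT hN hv) A hA) as e2.
  unfold ufun in e1, e2.
  rewrite (ulim_eq U _ (opnorm A * opnorm T) 0) in e1 by (first [assumption | apply seq_bound; auto | apply Ulim_cv; auto]).
  rewrite (ulim_eq U _ (opnorm A * opnorm T) L) in e2 by (first [assumption | apply seq_bound; auto | apply Ulim_cv; auto]).
  rewrite <- e2 in e1. apply hL. apply Rmult_eq_reg_r with (/ opnorm T). unfold Rdiv in e1. lra.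
  apply Rinv_neq_0_compat. lra.
Qed.

Lemma cv_le (a : nat -> R) l B : (forall n, a n <= B) -> Un_cv a l -> l <= B.
Proof.
  intros hb hcv. destruct (Rle_or_lt l B) as [h|h]; auto. exfalso.
  destruct (hcv (l - B) ltac:(lra)) as [n0 hn]. specialize (hn n0 (le_n _)). specialize (hb n0).
  unfold R_dist in hn. apply Rabs_def2 in hn. lra.
Qed.

Lemma sep_not3 {H : RHilbert} (T A : H -> H) u v L : BL T -> sep T A u v L -> ~ cond3P T.
Proof.
  intros hT [hA [hu [hv [cu [cv hL]]]]] h3.
  assert (hbj : BJ_orth T A).
  { intro lam. assert (hB : BL (op_add T (op_scal lam A))) by (apply BL_add; auto; apply BL_scal; auto).
    remember (op_add T (op_scal lam A)) as B.
    assert (hb : forall n, inner (T (u n)) (T (u n)) + 2 * lam * inner (A (u n)) (T (u n)) <= opnorm B * opnorm B).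
    { intro n. pose proof (opn_bound B (u n) hB). rewrite (proj1 hu n), Rmult_1_r in H0.
      pose proof (nrm_pos (B (u n))).
      assert (inner (B (u n)) (B (u n)) <= opnorm B * opnorm B) by (rewrite <- nrm_sq; nra).
      assert (e : B (u n) = vadd (T (u n)) (vscal lam (A (u n)))) by (rewrite HeqB; reflexivity). rewrite e in H2. rewrite ?inner_add_l, ?inner_add_r, ?inner_scal_l, ?inner_scal_r in H2. rewrite (inner_sym (T (u n)) (A (u n))) in H2.
      pose proof (inner_pos (A (u n))). nra. }
    pose proof (CV_plus _ _ _ _ (norming_sq T u hu) (CV_mult _ _ _ _ (cv_const (2 * lam)) cu)) as hc.
    pose proof (cv_le _ _ _ hb hc). pose proof (opn_nonneg B hB). pose proof (opn_nonneg T hT).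
    apply Rle_ge. apply sq_le_pos; auto. nra. }
  apply hL. apply ((proj1 (h3 A hA)) hbj v hv L). exists (fun n => n). split; auto.
Qed.


Lemma nat_above (x : R) : exists n : nat, x < INR n.
Proof.
  destruct (archimed x) as [h _]. destruct (up x) as [|p|p] eqn:E.
  - exists 1%nat. simpl. lra.
  - exists (Pos.to_nat p). rewrite INR_IZR_INZ, positive_nat_Z. lra.
  - exists 0%nat. simpl. assert (IZR (Z.neg p) < 0) by (apply IZR_lt; lia). lra.
Qed.

Lemma cv_ext (a b : nat -> R) l : (forall n, a n = b n) -> Un_cv a l -> Un_cv b l.
Proof. intros he h eps hx. destruct (h eps hx) as [n0 hn]. exists n0. intros n hn2. rewrite <- he. auto. Qed.

Lemma norming_of {H : RHilbert} (T : H -> H) (w : nat -> H) : BL T ->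
  (forall n, nrm (w n) = 1) -> (forall n, opnorm T - opnorm T / (INR n + 2) < nrm (T (w n))) ->
  norming_seq T w.
Proof.
  intros hT hu hl. split; auto. intros eps he.
  destruct (nat_above (opnorm T / eps)) as [n0 hn0]. exists n0. intros n hn.
  pose proof (hl n). assert (nrm (T (w n)) <= opnorm T) by (rewrite <- (Rmult_1_r (opnorm T)), <- (hu n); apply opn_bound; auto).
  assert (INR n0 <= INR n) by (apply le_INR; lia).
  pose proof (pos_INR n). pose proof (opn_nonneg T hT).
  assert (opnorm T / (INR n + 2) < eps).
  { apply Rmult_lt_reg_r with (INR n + 2). lra. unfold Rdiv. rewrite Rmult_assoc, Rinv_l, Rmult_1_r by lra.
    assert (opnorm T < eps * INR n0).
    { apply Rmult_lt_reg_r with (/ eps). apply Rinv_0_lt_compat; lra.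
      replace (eps * INR n0 * / eps) with (INR n0) by (field; lra). exact hn0. }
    nra. }
  unfold R_dist. rewrite Rabs_left1 by lra. lra.
Qed.

Lemma normalize_lemma {H : RHilbert} (T : H -> H) y : BL T -> nrm y <= 1 -> 0 < nrm (T y) ->
  nrm (vscal (/ nrm y) y) = 1 /\ nrm (T y) <= nrm (T (vscal (/ nrm y) y)).
Proof.
  intros hT h1 h2. assert (hy : 0 < nrm y).
  { destruct (Rle_lt_or_eq_dec 0 (nrm y) (nrm_pos y)) as [h|h]; auto.
    exfalso. rewrite (nrm_eq0 y (eq_sym h)), lin_zero, nrm_zero in h2 by apply hT. lra. }
  rewrite (proj2 (proj1 hT)), !nrm_scal, Rabs_right by (left; apply Rinv_0_lt_compat; auto).
  split. field. lra.
  apply Rmult_le_reg_l with (nrm y); auto. rewrite <- Rmult_assoc, Rinv_r, Rmult_1_l by lra.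
  pose proof (nrm_pos (T y)). nra.
Qed.

Lemma Mset_opp {H : RHilbert} (T : H -> H) x : BL T -> M_set T x -> M_set T (vopp x).
Proof. intros hT [h1 h2]. split. rewrite nrm_opp; auto. rewrite lin_opp, nrm_opp; auto. apply hT. Qed.

Lemma not2_cases {H : RHilbert} (T : H -> H) : BL T -> ~ cond2P T ->
  (exists x y, M_set T x /\ M_set T y /\ y <> x /\ y <> vopp x) \/
  (exists x0, M_set T x0 /\ opnorm T <= opnorm_on T (orth x0)) \/
  (forall x, ~ M_set T x).
Proof.
  intros hT hn. destruct (classic (exists x0, M_set T x0)) as [[x0 hx0]|hno].
  - destruct (classic (exists y, M_set T y /\ y <> x0 /\ y <> vopp x0)) as [[y hy]|hno2].
    + left. exists x0, y. tauto.
    + right; left. exists x0. split; auto. destruct (Rle_or_lt (opnorm T) (opnorm_on T (orth x0))) as [h|h]; auto.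
      exfalso. apply hn. exists x0. split. apply hx0. split; auto. intro x. split.
      * intro hm. destruct (classic (x = x0)); auto. destruct (classic (x = vopp x0)); auto. exfalso; apply hno2; eauto.
      * intros [e|e]; subst; auto. apply Mset_opp; auto.
  - right; right. intros x hx. apply hno. eauto.
Qed.

Lemma sep_a {H : RHilbert} (T : H -> H) x y : BL T -> 0 < opnorm T ->
  M_set T x -> M_set T y -> y <> x -> y <> vopp x -> exists A u v L, sep T A u v L.
Proof.
  intros hT hN [hx1 hx2] [hy1 hy2] hne1 hne2.
  set (s := inner y x). set (w := vsub y (vscal s x)).
  assert (hxx : inner x x = 1) by (rewrite <- nrm_sq, hx1; ring).
  assert (hyy : inner y y = 1) by (rewrite <- nrm_sq, hy1; ring).
  exists (fun z => vscal (inner z w) (T y)), (fun _ => x), (fun _ => y), ((1 - s * s) * (opnorm T * opnorm T)).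
  split; [apply BL_rank1|split; [|split; [|split; [|split]]]].
  - split; auto. rewrite hx2. apply cv_const.
  - split; auto. rewrite hy2. apply cv_const.
  - apply (cv_ext (fun _ => 0)); [|apply cv_const]. intro n. unfold w, s. inner_simpl.
    rewrite hxx, (inner_sym x y). ring.
  - apply (cv_ext (fun _ => (1 - s * s) * (opnorm T * opnorm T))); [|apply cv_const]. intro n. unfold w.
    inner_simpl. rewrite hyy, <- (nrm_sq (T y)), hy2. fold s. ring.
  - intro e. assert (hs : s * s = 1) by (apply Rmult_integral in e; destruct e; nra).
    assert (hw : w = vzero).
    { apply inner_def. unfold w. inner_simpl. rewrite hxx, hyy, (inner_sym x y). fold s. nra. }
    apply vsub_eq0 in hw. assert (s = 1 \/ s = -1) by nra. destruct H0 as [e1|e1]; rewrite e1 in hw.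
    + apply hne1. rewrite hw. apply vscal_1.
    + apply hne2. rewrite hw. symmetry. apply vopp_scal.
Qed.

Lemma sep_b {H : RHilbert} (T : H -> H) x0 : BL T -> 0 < opnorm T ->
  M_set T x0 -> opnorm T <= opnorm_on T (orth x0) -> exists A u v L, sep T A u v L.
Proof.
  intros hT hN [hx1 hx2] hge.
  assert (hex : forall n : nat, exists h, orth x0 h /\ nrm h = 1 /\ opnorm T - opnorm T / (INR n + 2) < nrm (T h)).
  { intro n. pose proof (pos_INR n).
    assert (he : opnorm T / (INR n + 2) > 0) by (apply Rdiv_lt_0_compat; lra).
    destruct (opnorm_approx T (orth x0) _ hT (orth_zero x0) he) as [y [hy1 [hy2 hy3]]].
    assert (opnorm T / (INR n + 2) <= opnorm T / 2).
    { apply Rmult_le_compat_l. lra. apply Rinv_le_contravar; lra. }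
    assert (hp : 0 < nrm (T y)) by lra.
    destruct (normalize_lemma T y hT hy2 hp) as [n1 n2].
    exists (vscal (/ nrm y) y). split. apply orth_scal; auto. split; auto. lra. }
  set (h := fun n => epsilon (inhabits vzero) (fun h => orth x0 h /\ nrm h = 1 /\ opnorm T - opnorm T / (INR n + 2) < nrm (T h))).
  assert (hh : forall n, orth x0 (h n) /\ nrm (h n) = 1 /\ opnorm T - opnorm T / (INR n + 2) < nrm (T (h n))).
  { intro n. unfold h. apply epsilon_spec. apply hex. }
  assert (hxx : inner x0 x0 = 1) by (rewrite <- nrm_sq, hx1; ring).
  exists (fun z => vscal (inner z x0) (T x0)), h, (fun _ => x0), (opnorm T * opnorm T).
  split; [apply BL_rank1|split; [|split; [|split; [|split]]]].
  - apply norming_of; auto; intro n; apply hh.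
  - split; auto. rewrite hx2. apply cv_const.
  - apply (cv_ext (fun _ => 0)); [|apply cv_const]. intro n. inner_simpl.
    destruct (hh n) as [ho _]. unfold orth in ho. rewrite ho. ring.
  - apply (cv_ext (fun _ => opnorm T * opnorm T)); [|apply cv_const]. intro n.
    inner_simpl. rewrite hxx, <- (nrm_sq (T x0)), hx2. ring.
  - nra.
Qed.


Definition bw_pick (a : nat -> R) (l : R) (k j : nat) : nat :=
  epsilon (inhabits 0%nat) (fun m => (k <= m)%nat /\ Rabs (a m - l) < / (INR j + 1)).

Fixpoint bw_phi (a : nat -> R) (l : R) (n : nat) : nat :=
  match n with O => bw_pick a l 0 0 | S n' => bw_pick a l (S (bw_phi a l n')) (S n') end.

Lemma BW (a : nat -> R) M : (forall n, Rabs (a n) <= M) ->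
  exists phi l, (forall n, (phi n < phi (S n))%nat) /\ Un_cv (fun n => a (phi n)) l.
Proof.
  intros hb. destruct ultra_exists as [U hU]. fold (isU U) in hU.
  remember (ulim U a) as l. assert (hl : Ulim U a l) by (subst l; eapply ulim_spec; eauto).
  assert (C : forall k j, (k <= bw_pick a l k j)%nat /\ Rabs (a (bw_pick a l k j) - l) < / (INR j + 1)).
  { intros k j. unfold bw_pick. apply epsilon_spec.
    assert (he : / (INR j + 1) > 0) by (apply Rinv_0_lt_compat; pose proof (pos_INR j); lra).
    destruct (U_ne U _ hU ((proj1 hU) _ _ (hl _ he) ((proj2 (proj2 (proj2 (proj2 hU)))) k))) as [m [h1 h2]].
    exists m. auto. }
  exists (bw_phi a l), l. split.
  - intro n. simpl. destruct (C (S (bw_phi a l n)) (S n)). lia.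
  - assert (hn : forall n, Rabs (a (bw_phi a l n) - l) < / (INR n + 1)).
    { intro n. destruct n; simpl; apply C. }
    intros eps he. destruct (nat_above (/ eps)) as [n0 hn0]. exists n0. intros n hn2.
    unfold R_dist. eapply Rlt_trans. apply hn.
    assert (INR n0 <= INR n) by (apply le_INR; lia).
    apply Rmult_lt_reg_r with (INR n + 1). pose proof (pos_INR n); lra.
    rewrite Rinv_l by (pose proof (pos_INR n); lra).
    apply Rle_lt_trans with (eps * / eps). right; field; lra. apply Rmult_lt_compat_l; lra.
Qed.

Lemma vec_ext {H : RHilbert} (u v : H) : (forall z, inner u z = inner v z) -> u = v.
Proof.
  intro h. apply vsub_eq0. apply inner_def. rewrite inner_sub_l, h. ring.
Qed.

Lemma eq_of_close (a b : R) : (forall eps, eps > 0 -> Rabs (a - b) < eps) -> a = b.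
Proof.
  intro h. destruct (Req_dec a b) as [e|e]; auto. exfalso.
  assert (hp : Rabs (a - b) > 0) by (apply Rabs_pos_lt; lra). specialize (h _ hp). lra.
Qed.

Lemma sD_nonneg {H : RHilbert} (T : H -> H) x : 0 <= sD T x.
Proof. apply sqrt_pos. Qed.

Lemma sD_sq {H : RHilbert} (T : H -> H) x : BL T -> sD T x * sD T x = Df T x x.
Proof. intros. apply sqrt_sqrt, Df_pos; auto. Qed.

Lemma Df_unit {H : RHilbert} (T : H -> H) x : nrm x = 1 -> Df T x x = opnorm T * opnorm T - nrm (T x) * nrm (T x).
Proof. intros h. unfold Df. rewrite <- !nrm_sq, h. ring. Qed.

Lemma cauchy_limit {H : RHilbert} (s : nat -> H) :
  (forall eps, eps > 0 -> exists n0, forall m n, (m >= n0)%nat -> (n >= n0)%nat -> nrm (vsub (s m) (s n)) < eps) ->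
  exists l, forall eps, eps > 0 -> exists n0, forall n, (n >= n0)%nat -> nrm (vsub (s n) l) < eps.
Proof. intros h. apply (complete s). exact h. Qed.

Lemma limit_attain {H : RHilbert} (T : H -> H) (y : nat -> H) (x : H) : BL T ->
  (forall n, nrm (y n) = 1) -> Un_cv (fun n => nrm (T (y n))) (opnorm T) ->
  (forall eps, eps > 0 -> exists n0, forall n, (n >= n0)%nat -> nrm (vsub (y n) x) < eps) ->
  M_set T x.
Proof.
  intros hT hu hcv hl. split.
  - symmetry. apply eq_of_close. intros eps he. destruct (hl eps he) as [n0 hn]. specialize (hn n0 (le_n _)).
    pose proof (nrm_sub_abs (y n0) x). rewrite hu in H0. lra.
  - apply eq_of_close. intros eps he. pose proof (opn_nonneg T hT).
    assert (hd : eps / 2 / (opnorm T + 1) > 0) by (apply Rdiv_lt_0_compat; lra).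
    destruct (hl _ hd) as [n0 hn0]. destruct (hcv (eps / 2) ltac:(lra)) as [n1 hn1].
    set (n := Nat.max n0 n1). specialize (hn0 n ltac:(lia)). specialize (hn1 n ltac:(lia)). unfold R_dist in hn1.
    pose proof (nrm_sub_abs (T (y n)) (T x)). rewrite <- lin_sub in H1 by apply hT.
    pose proof (opn_bound T (vsub (y n) x) hT).
    assert (opnorm T * nrm (vsub (y n) x) <= (opnorm T + 1) * (eps / 2 / (opnorm T + 1))).
    { pose proof (nrm_pos (vsub (y n) x)). apply Rmult_le_compat; lra. }
    replace ((opnorm T + 1) * (eps / 2 / (opnorm T + 1))) with (eps / 2) in H3 by (field; lra).
    replace (nrm (T x) - opnorm T) with (- (nrm (T (y n)) - nrm (T x)) + (nrm (T (y n)) - opnorm T)) by ring.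
    eapply Rle_lt_trans. apply Rabs_triang. rewrite Rabs_Ropp. lra.
Qed.

Lemma sD_sub_le {H : RHilbert} (T : H -> H) x y : BL T -> sD T (vsub x y) <= sD T x + sD T y.
Proof.
  intros hT. unfold vsub. eapply Rle_trans. apply sD_triangle; auto.
  rewrite vopp_scal, sD_scal by auto. rewrite (Rabs_left (-1)) by lra. lra.
Qed.

Lemma sqrt_mono_le (k a b : R) : 0 < k -> 0 <= a -> 0 <= b -> k * (a * a) <= b * b -> sqrt k * a <= b.
Proof.
  intros hk ha hb h. apply sq_le_pos; auto.
  replace (sqrt k * a * (sqrt k * a)) with ((sqrt k * sqrt k) * (a * a)) by ring.
  rewrite sqrt_sqrt by lra. auto.
Qed.

Lemma one_step {H : RHilbert} (T : H -> H) (S : H -> Prop) (e : H) :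
  BL T -> 0 < opnorm T -> (forall x, ~ M_set T x) ->
  (forall a x, S x -> S (vscal a x)) -> (forall x y a, S x -> S y -> S (vsub x (vscal a y))) ->
  S e -> nrm e = 1 ->
  (forall eps, eps > 0 -> exists x, S x /\ nrm x = 1 /\ opnorm T - eps < nrm (T x)) ->
  forall eps, eps > 0 -> exists x, (S x /\ inner x e = 0) /\ nrm x = 1 /\ opnorm T - eps < nrm (T x).
Proof.
  intros hT hN hM Ssc Ssub Se he1 hQ eps0 heps0.
  apply NNPP. intro hno.
  remember (opnorm T) as N.
  remember (Rmin eps0 (N / 2)) as e1.
  assert (he1a : e1 <= eps0) by (subst e1; apply Rmin_l).
  assert (he1b : e1 <= N / 2) by (subst e1; apply Rmin_r).
  assert (he1c : 0 < e1) by (subst e1; apply Rmin_pos; lra).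
  remember (N - e1) as q.
  assert (hgu : forall x, S x -> inner x e = 0 -> nrm x = 1 -> nrm (T x) <= q).
  { intros x h1 h2 h3. destruct (Rle_or_lt (nrm (T x)) q) as [h|h]; auto. exfalso. apply hno.
    exists x. split; auto. split; auto. lra. }
  assert (hg : forall g, S g -> inner g e = 0 -> nrm (T g) <= q * nrm g).
  { intros g h1 h2. destruct (Req_dec (nrm g) 0) as [z|z].
    - rewrite (nrm_eq0 g z), lin_zero, nrm_zero by apply hT. lra.
    - pose proof (nrm_pos g).
      assert (hgu' := hgu (vscal (/ nrm g) g) (Ssc _ _ h1) ltac:(rewrite inner_scal_l, h2; ring)
         ltac:(rewrite nrm_scal, Rabs_right by (left; apply Rinv_0_lt_compat; lra); field; lra)).
      rewrite (proj2 (proj1 hT)), nrm_scal, Rabs_right in hgu' by (left; apply Rinv_0_lt_compat; lra).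
      apply Rmult_le_reg_l with (/ nrm g). apply Rinv_0_lt_compat; lra.
      replace (/ nrm g * (q * nrm g)) with q by (field; lra). lra. }
  remember (N * N - q * q) as kap.
  assert (hkap : 0 < kap) by (subst kap; nra).
  assert (hDf : forall g, S g -> inner g e = 0 -> sqrt kap * nrm g <= sD T g).
  { intros g h1 h2. apply sqrt_mono_le; auto using nrm_pos, sD_nonneg. rewrite sD_sq by auto. unfold Df.
    rewrite <- HeqN, <- !nrm_sq. pose proof (hg g h1 h2). pose proof (nrm_pos (T g)). pose proof (nrm_pos g).
    subst kap. nra. }
  assert (hex : forall n : nat, exists x, S x /\ nrm x = 1 /\ N - N / (INR n + 2) < nrm (T x)).
  { intro n. subst N. apply hQ. apply Rdiv_lt_0_compat. lra. pose proof (pos_INR n). lra. }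
  set (xs := fun n => epsilon (inhabits vzero) (fun x => S x /\ nrm x = 1 /\ N - N / (INR n + 2) < nrm (T x))).
  assert (hxs : forall n, S (xs n) /\ nrm (xs n) = 1 /\ N - N / (INR n + 2) < nrm (T (xs n))).
  { intro n. unfold xs. apply epsilon_spec. apply hex. }
  clearbody xs.
  assert (hnorm : norming_seq T xs).
  { apply norming_of; auto; intro n; try rewrite <- HeqN; apply hxs. }
  assert (hsD : forall eps, eps > 0 -> exists n0, forall n, (n >= n0)%nat -> sD T (xs n) < eps).
  { intros eps he. destruct (nat_above (2 * N * N / (eps * eps))) as [n0 hn0]. exists n0. intros n hn.
    destruct (hxs n) as [_ [hu ht]].
    assert (htN : nrm (T (xs n)) <= N) by (subst N; apply (norming_le T xs n hT hnorm)).
    assert (hsq : sD T (xs n) * sD T (xs n) <= 2 * N * N / (INR n + 2)).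
    { rewrite sD_sq, Df_unit, <- HeqN by auto. pose proof (pos_INR n).
      assert (N / (INR n + 2) * (INR n + 2) = N) by (field; lra).
      assert (2 * N * N / (INR n + 2) * (INR n + 2) = 2 * N * N) by (field; lra).
      assert (0 < N / (INR n + 2)) by (apply Rdiv_lt_0_compat; lra).
      pose proof (nrm_pos (T (xs n))).
      assert (N * N - nrm (T (xs n)) * nrm (T (xs n)) <= N / (INR n + 2) * (2 * N)) by nra.
      replace (2 * N * N / (INR n + 2)) with (N / (INR n + 2) * (2 * N)) by (field; lra). lra. }
    assert (INR n0 <= INR n) by (apply le_INR; lia).
    assert (2 * N * N / (INR n + 2) < eps * eps).
    { pose proof (pos_INR n).
      assert (2 * N * N < eps * eps * (INR n + 2)).
      { assert (2 * N * N / (eps * eps) * (eps * eps) = 2 * N * N) by (field; lra).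
        assert (0 < eps * eps) by nra. nra. }
      apply Rmult_lt_reg_r with (INR n + 2). lra.
      replace (2 * N * N / (INR n + 2) * (INR n + 2)) with (2 * N * N) by (field; lra). lra. }
    pose proof (sD_nonneg T (xs n)). nra. }
  destruct (BW (fun n => inner (xs n) e) 1) as [phi [alpha [hphi hcva]]].
  { intro n. eapply Rle_trans. apply inner_le. destruct (hxs n) as [_ [hu _]]. rewrite hu, he1. lra. }
  set (y := fun n => xs (phi n)). set (b := fun n => inner (y n) e).
  set (g := fun n => vsub (y n) (vscal (b n) e)).
  assert (hee : inner e e = 1) by (rewrite <- nrm_sq, he1; ring).
  assert (hgS : forall n, S (g n)) by (intro n; apply Ssub; auto; apply hxs).
  assert (hge : forall n, inner (g n) e = 0) by (intro n; unfold g; inner_simpl; rewrite hee; unfold b; ring).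
  assert (hdS : forall m n, S (vsub (g m) (g n))).
  { intros m n. rewrite <- (vscal_1 (g n)). apply Ssub; auto. }
  assert (hde : forall m n, inner (vsub (g m) (g n)) e = 0).
  { intros m n. rewrite inner_sub_l, !hge. ring. }
  assert (hdid : forall m n, vsub (g m) (g n) = vadd (vsub (y m) (y n)) (vscal (b n - b m) e)).
  { intros m n. apply vec_ext. intro z. unfold g. inner_simpl. ring. }
  assert (hdb : forall m n, sqrt kap * nrm (vsub (g m) (g n)) <= sD T (y m) + sD T (y n) + Rabs (b n - b m) * N).
  { intros m n. eapply Rle_trans. apply hDf; auto. rewrite hdid.
    eapply Rle_trans. apply sD_triangle; auto. rewrite sD_scal by auto.
    pose proof (sD_sub_le T (y m) (y n) hT). pose proof (sD_le T e hT). rewrite he1, <- HeqN in H1.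
    pose proof (Rabs_pos (b n - b m)). nra. }
  assert (hsk : 0 < sqrt kap) by (apply sqrt_lt_R0; auto).
  assert (hcauchy : forall eps, eps > 0 -> exists n0, forall m n, (m >= n0)%nat -> (n >= n0)%nat -> nrm (vsub (g m) (g n)) < eps).
  { intros eps he. pose proof (opn_nonneg T hT). rewrite <- HeqN in H0.
    remember (eps * sqrt kap / (4 * (1 + N))) as del.
    assert (hdel : 0 < del) by (subst del; apply Rdiv_lt_0_compat; [apply Rmult_lt_0_compat|]; lra).
    destruct (hsD del hdel) as [n0 hn0]. destruct (hcva del hdel) as [n1 hn1].
    exists (Nat.max n0 n1). intros m n hm hn.
    assert (h1 : sD T (y m) < del) by (unfold y; apply hn0; pose proof (phi_ge phi hphi m); lia).
    assert (h2 : sD T (y n) < del) by (unfold y; apply hn0; pose proof (phi_ge phi hphi n); lia).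
    assert (h3 : Rabs (b m - alpha) < del) by (apply hn1; lia).
    assert (h4 : Rabs (b n - alpha) < del) by (apply hn1; lia).
    assert (h5 : Rabs (b n - b m) < 2 * del).
    { replace (b n - b m) with ((b n - alpha) - (b m - alpha)) by ring. eapply Rle_lt_trans. apply Rabs_triang.
      rewrite Rabs_Ropp. lra. }
    specialize (hdb m n).
    assert (Rabs (b n - b m) * N <= 2 * del * N) by (apply Rmult_le_compat_r; lra).
    assert (sqrt kap * nrm (vsub (g m) (g n)) < eps * sqrt kap).
    { assert (del * (4 * (1 + N)) = eps * sqrt kap) by (subst del; field; lra). nra. }
    apply Rmult_lt_reg_l with (sqrt kap); auto. lra. }
  destruct (cauchy_limit g hcauchy) as [glim hglim].
  set (x := vadd (vscal alpha e) glim).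
  assert (hyid : forall n, vsub (y n) x = vadd (vsub (g n) glim) (vscal (b n - alpha) e)).
  { intro n. apply vec_ext. intro z. unfold g, x. inner_simpl. ring. }
  apply (hM x). apply (limit_attain T y x hT).
  - intro n. apply hxs.
  - subst N. apply (cv_subseq _ _ phi hphi (proj2 hnorm)).
  - intros eps he. destruct (hglim (eps / 2) ltac:(lra)) as [n0 hn0]. destruct (hcva (eps / 2) ltac:(lra)) as [n1 hn1].
    exists (Nat.max n0 n1). intros n hn. rewrite hyid. eapply Rle_lt_trans. apply nrm_triangle.
    rewrite nrm_scal, he1, Rmult_1_r. specialize (hn0 n ltac:(lia)). specialize (hn1 n ltac:(lia)).
    unfold R_dist in hn1. change (Rabs (b n - alpha) < eps / 2) in hn1. generalize hn0 hn1. generalize (nrm (vsub (g n) glim)) (Rabs (b n - alpha)). intros. lra.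
Qed.


Definition vlim {H : RHilbert} (s : nat -> H) (l : H) : Prop :=
  forall eps, eps > 0 -> exists n0, forall n, (n >= n0)%nat -> nrm (vsub (s n) l) < eps.

Lemma vlim_unique {H : RHilbert} (s : nat -> H) l1 l2 : vlim s l1 -> vlim s l2 -> l1 = l2.
Proof.
  intros h1 h2. apply vsub_eq0, nrm_eq0. symmetry. apply eq_of_close. intros eps he.
  destruct (h1 (eps / 2) ltac:(lra)) as [n1 hn1]. destruct (h2 (eps / 2) ltac:(lra)) as [n2 hn2].
  specialize (hn1 (Nat.max n1 n2) ltac:(lia)). specialize (hn2 (Nat.max n1 n2) ltac:(lia)).
  remember (s (Nat.max n1 n2)) as m.
  assert (e : vsub l1 l2 = vadd (vsub m l2) (vsub l1 m)) by (apply vec_ext; intro z; inner_simpl; ring).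
  rewrite e. rewrite Rminus_0_l, Rabs_Ropp, Rabs_right by (apply Rle_ge, nrm_pos).
  eapply Rle_lt_trans. apply nrm_triangle. rewrite (nrm_sub_sym l1 m). lra.
Qed.

Lemma vlim_add {H : RHilbert} (s t : nat -> H) l m : vlim s l -> vlim t m -> vlim (fun n => vadd (s n) (t n)) (vadd l m).
Proof.
  intros h1 h2 eps he. destruct (h1 (eps / 2) ltac:(lra)) as [n1 hn1]. destruct (h2 (eps / 2) ltac:(lra)) as [n2 hn2].
  exists (Nat.max n1 n2). intros n hn. specialize (hn1 n ltac:(lia)). specialize (hn2 n ltac:(lia)).
  assert (e : vsub (vadd (s n) (t n)) (vadd l m) = vadd (vsub (s n) l) (vsub (t n) m)) by (apply vec_ext; intro z; inner_simpl; ring).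
  rewrite e. eapply Rle_lt_trans. apply nrm_triangle. lra.
Qed.

Lemma vlim_scal {H : RHilbert} (s : nat -> H) l a : vlim s l -> vlim (fun n => vscal a (s n)) (vscal a l).
Proof.
  intros h eps he. destruct (h (eps / (Rabs a + 1))) as [n0 hn0].
  { apply Rdiv_lt_0_compat; auto. pose proof (Rabs_pos a); lra. }
  exists n0. intros n hn. specialize (hn0 n hn).
  assert (e : vsub (vscal a (s n)) (vscal a l) = vscal a (vsub (s n) l)) by (apply vec_ext; intro z; inner_simpl; ring).
  rewrite e, nrm_scal. pose proof (Rabs_pos a). pose proof (nrm_pos (vsub (s n) l)).
  apply Rle_lt_trans with ((Rabs a + 1) * nrm (vsub (s n) l)). nra.
  apply Rmult_lt_reg_l with (/ (Rabs a + 1)). apply Rinv_0_lt_compat; lra.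
  rewrite <- Rmult_assoc, Rinv_l, Rmult_1_l by lra. replace (/ (Rabs a + 1) * eps) with (eps / (Rabs a + 1)) by (field; lra). lra.
Qed.

Lemma vlim_ev {H : RHilbert} (s : nat -> H) c : (exists n0, forall n, (n >= n0)%nat -> s n = c) -> vlim s c.
Proof.
  intros [n0 hn] eps he. exists n0. intros n h. rewrite hn by auto. rewrite vsub_self, nrm_zero. lra.
Qed.

Lemma vlim_nrm_le {H : RHilbert} (s : nat -> H) l B : vlim s l -> (forall n, nrm (s n) <= B) -> nrm l <= B.
Proof.
  intros h hb. destruct (Rle_or_lt (nrm l) B) as [x|x]; auto. exfalso.
  destruct (h (nrm l - B) ltac:(lra)) as [n0 hn]. specialize (hn n0 (le_n _)). specialize (hb n0).
  pose proof (nrm_sub_triangle l (s n0)). rewrite nrm_sub_sym in H0. lra.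
Qed.

Definition ON {H : RHilbert} (E : nat -> H) : Prop :=
  forall i j, inner (E i) (E j) = if Nat.eq_dec i j then 1 else 0.

Fixpoint psum {H : RHilbert} (E : nat -> H) (z : H) (n : nat) : H :=
  match n with O => vzero | S n' => vadd (psum E z n') (vscal (inner z (E n')) (E n')) end.

Fixpoint ssum {H : RHilbert} (E : nat -> H) (z : H) (n : nat) : R :=
  match n with O => 0 | S n' => ssum E z n' + inner z (E n') * inner z (E n') end.

Lemma psum_E {H : RHilbert} (E : nat -> H) z n j : ON E ->
  inner (psum E z n) (E j) = if lt_dec j n then inner z (E j) else 0.
Proof.
  intros hE. induction n; simpl.
  - rewrite inner_0_l. destruct (lt_dec j 0); [lia|auto].
  - inner_simpl. rewrite IHn, hE. destruct (Nat.eq_dec n j) as [e|e].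
    + subst. destruct (lt_dec j j); [lia|]. destruct (lt_dec j (S j)); [ring|lia].
    + destruct (lt_dec j n); destruct (lt_dec j (S n)); try lia; ring.
Qed.

Lemma ssum_nonneg {H : RHilbert} (E : nat -> H) z n : 0 <= ssum E z n.
Proof. induction n; simpl. lra. pose proof (Rle_0_sqr (inner z (E n))). unfold Rsqr in H0. lra. Qed.

Lemma psum_psum {H : RHilbert} (E : nat -> H) z m n : ON E -> (n <= m)%nat ->
  inner (psum E z m) (psum E z n) = ssum E z n.
Proof.
  intros hE. induction n; intros hle; simpl.
  - apply inner_0_r.
  - inner_simpl. rewrite IHn by lia. rewrite psum_E by auto. destruct (lt_dec n m); [ring|lia].
Qed.

Lemma z_psum {H : RHilbert} (E : nat -> H) z n : inner z (psum E z n) = ssum E z n.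
Proof. induction n; simpl. apply inner_0_r. inner_simpl. rewrite IHn. ring. Qed.

Lemma bessel {H : RHilbert} (E : nat -> H) z n : ON E -> ssum E z n <= inner z z.
Proof.
  intros hE. pose proof (inner_pos (vsub z (psum E z n))). rewrite ?inner_sub_l, ?inner_sub_r in H0.
  rewrite (inner_sym (psum E z n) z), z_psum, psum_psum in H0 by auto. lra.
Qed.

Lemma psum_diff {H : RHilbert} (E : nat -> H) z m n : ON E -> (n <= m)%nat ->
  inner (vsub (psum E z m) (psum E z n)) (vsub (psum E z m) (psum E z n)) = ssum E z m - ssum E z n.
Proof.
  intros hE hle. inner_simpl. rewrite (inner_sym (psum E z n) (psum E z m)), !psum_psum by (auto; lia). ring.
Qed.

Lemma psum_cauchy {H : RHilbert} (E : nat -> H) z : ON E ->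
  forall eps, eps > 0 -> exists n0, forall m n, (m >= n0)%nat -> (n >= n0)%nat -> nrm (vsub (psum E z m) (psum E z n)) < eps.
Proof.
  intros hE eps he.
  assert (hc : Cauchy_crit (ssum E z)).
  { apply CV_Cauchy. apply growing_cv.
    - intro n. simpl. pose proof (Rle_0_sqr (inner z (E n))). unfold Rsqr in H0. lra.
    - exists (inner z z). intros r [i ->]. apply bessel; auto. }
  destruct (hc (eps * eps) ltac:(nra)) as [n0 hn0]. exists n0. intros m n hm hn.
  specialize (hn0 m n hm hn). unfold Rdist in hn0.
  assert (key : forall a b, (b <= a)%nat -> Rabs (ssum E z a - ssum E z b) < eps * eps -> nrm (vsub (psum E z a) (psum E z b)) < eps).
  { intros a b hab h. pose proof (psum_diff E z a b hE hab). rewrite <- nrm_sq in H0.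
    pose proof (nrm_pos (vsub (psum E z a) (psum E z b))). pose proof (Rle_abs (ssum E z a - ssum E z b)). nra. }
  destruct (le_lt_dec n m) as [h|h].
  - apply key; auto.
  - rewrite nrm_sub_sym. apply key. lia. rewrite Rabs_minus_sym. auto.
Qed.

Definition proj {H : RHilbert} (E : nat -> H) (z : H) : H := epsilon (inhabits vzero) (vlim (psum E z)).

Lemma proj_spec {H : RHilbert} (E : nat -> H) z : ON E -> vlim (psum E z) (proj E z).
Proof. intros hE. unfold proj. apply epsilon_spec. apply cauchy_limit. apply psum_cauchy; auto. Qed.

Lemma psum_add {H : RHilbert} (E : nat -> H) z1 z2 n : psum E (vadd z1 z2) n = vadd (psum E z1 n) (psum E z2 n).
Proof.
  apply vec_ext. induction n; intro w; simpl.
  - inner_simpl. ring.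
  - inner_simpl. rewrite IHn. inner_simpl. ring.
Qed.

Lemma psum_scal {H : RHilbert} (E : nat -> H) a z n : psum E (vscal a z) n = vscal a (psum E z n).
Proof.
  apply vec_ext. induction n; intro w; simpl.
  - inner_simpl. ring.
  - inner_simpl. rewrite IHn. inner_simpl. ring.
Qed.

Lemma proj_BL {H : RHilbert} (E : nat -> H) : ON E -> BL (proj E).
Proof.
  intros hE. split; [split|].
  - intros x y. apply (vlim_unique (psum E (vadd x y))). apply proj_spec; auto.
    eapply (fun h => proj1 (conj h I)). intros eps he. destruct (vlim_add _ _ _ _ (proj_spec E x hE) (proj_spec E y hE) eps he) as [n0 hn].
    exists n0. intros n hn2. rewrite psum_add. auto.
  - intros a x. apply (vlim_unique (psum E (vscal a x))). apply proj_spec; auto.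
    intros eps he. destruct (vlim_scal _ _ a (proj_spec E x hE) eps he) as [n0 hn].
    exists n0. intros n hn2. rewrite psum_scal. auto.
  - exists 1. intro x. rewrite Rmult_1_l. apply (vlim_nrm_le (psum E x)). apply proj_spec; auto.
    intro n. apply nrm_le_sq. apply nrm_pos. rewrite psum_psum by auto. rewrite nrm_sq. apply bessel; auto.
Qed.

Lemma ssum_E {H : RHilbert} (E : nat -> H) j n : ON E -> ssum E (E j) n = if lt_dec j n then 1 else 0.
Proof.
  intros hE. induction n; simpl.
  - destruct (lt_dec j 0); [lia|auto].
  - rewrite IHn, hE. destruct (Nat.eq_dec j n) as [e|e].
    + subst. destruct (lt_dec n n); [lia|]. destruct (lt_dec n (S n)); [ring|lia].
    + destruct (lt_dec j n); destruct (lt_dec j (S n)); try lia; ring.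
Qed.

Lemma proj_E {H : RHilbert} (E : nat -> H) j : ON E -> proj E (E j) = E j.
Proof.
  intros hE. apply (vlim_unique (psum E (E j))). apply proj_spec; auto.
  apply vlim_ev. exists (S j). intros n hn. symmetry. apply vsub_eq0. apply inner_def.
  inner_simpl. rewrite (inner_sym (psum E (E j) n) (E j)), z_psum, psum_psum, ssum_E by auto.
  rewrite hE. destruct (Nat.eq_dec j j); [|lia]. destruct (lt_dec j n); [ring|lia].
Qed.

Lemma ssum_orth {H : RHilbert} (E : nat -> H) z n : (forall k, inner z (E k) = 0) -> ssum E z n = 0.
Proof. intros h. induction n; simpl. auto. rewrite IHn, h. ring. Qed.

Lemma proj_orth {H : RHilbert} (E : nat -> H) z : ON E -> (forall k, inner z (E k) = 0) -> proj E z = vzero.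
Proof.
  intros hE h. apply (vlim_unique (psum E z)). apply proj_spec; auto.
  apply vlim_ev. exists O. intros n _. apply inner_def. rewrite psum_psum, ssum_orth by auto. auto.
Qed.


Definition Sl {H : RHilbert} (l : list H) (x : H) : Prop := forall y, In y l -> inner x y = 0.

Definition pick_next {H : RHilbert} (T : H -> H) (l : list H) : H :=
  epsilon (inhabits vzero) (fun x => Sl l x /\ nrm x = 1 /\
     opnorm T - opnorm T / (INR (length l) + 2) < nrm (T x)).

Fixpoint pref {H : RHilbert} (T : H -> H) (k : nat) : list H :=
  match k with O => nil | S k' => pref T k' ++ (pick_next T (pref T k') :: nil) end.

Definition ee {H : RHilbert} (T : H -> H) (k : nat) : H := pick_next T (pref T k).

Definition Good {H : RHilbert} (T : H -> H) (l : list H) : Prop :=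
  forall eps, eps > 0 -> exists x, Sl l x /\ nrm x = 1 /\ opnorm T - eps < nrm (T x).

Lemma pref_length {H : RHilbert} (T : H -> H) k : length (pref T k) = k.
Proof. induction k; simpl; auto. rewrite length_app, IHk. simpl. lia. Qed.

Lemma pick_next_spec {H : RHilbert} (T : H -> H) (l : list H) : 0 < opnorm T -> Good T l ->
  Sl l (pick_next T l) /\ nrm (pick_next T l) = 1 /\
     opnorm T - opnorm T / (INR (length l) + 2) < nrm (T (pick_next T l)).
Proof.
  intros hN hg. unfold pick_next.
  apply (epsilon_spec (inhabits vzero) (fun x => Sl l x /\ nrm x = 1 /\
     opnorm T - opnorm T / (INR (length l) + 2) < nrm (T x))).
  apply hg. apply Rdiv_lt_0_compat; auto. pose proof (pos_INR (length l)). lra.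
Qed.

Lemma good_pref {H : RHilbert} (T : H -> H) : BL T -> 0 < opnorm T -> (forall x, ~ M_set T x) ->
  forall k, Good T (pref T k).
Proof.
  intros hT hN hM k. induction k.
  - intros eps he. simpl. set (e1 := Rmin eps (opnorm T / 2)).
    assert (he1 : 0 < e1) by (unfold e1; apply Rmin_pos; lra).
    assert (he1a : e1 <= eps) by apply Rmin_l. assert (he1b : e1 <= opnorm T / 2) by apply Rmin_r.
    destruct (opn_approx T e1 hT he1) as [y [hy1 hy2]].
    destruct (normalize_lemma T y hT hy1 ltac:(lra)) as [n1 n2].
    exists (vscal (/ nrm y) y). split. intros z hz. destruct hz. split; auto. lra.
  - assert (hsp : Sl (pref T k) (ee T k) /\ nrm (ee T k) = 1 /\
       opnorm T - opnorm T / (INR (length (pref T k)) + 2) < nrm (T (ee T k))).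
    { apply pick_next_spec; auto. }
    destruct hsp as [hs1 [hs2 _]].
    intros eps he.
    destruct (one_step T (Sl (pref T k)) (ee T k) hT hN hM) with (eps := eps) as [x [[hx1 hx2] [hx3 hx4]]]; auto.
    + intros a x hx y hy. rewrite inner_scal_l, hx; auto. ring.
    + intros x y a hx hy z hz. rewrite inner_sub_l, inner_scal_l, hx, hy; auto. ring.
    + exists x. split; auto. intros z hz. simpl in hz. apply in_app_or in hz. destruct hz as [hz|[hz|[]]].
      * auto.
      * subst z. unfold ee in hx2. auto.
Qed.

Lemma ee_spec {H : RHilbert} (T : H -> H) k : BL T -> 0 < opnorm T -> (forall x, ~ M_set T x) ->
  Sl (pref T k) (ee T k) /\ nrm (ee T k) = 1 /\ opnorm T - opnorm T / (INR k + 2) < nrm (T (ee T k)).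
Proof.
  intros hT hN hM. pose proof (pick_next_spec T (pref T k) hN (good_pref T hT hN hM k)) as h.
  rewrite pref_length in h. exact h.
Qed.

Lemma ee_in {H : RHilbert} (T : H -> H) k i : (i < k)%nat -> In (ee T i) (pref T k).
Proof.
  induction k; intros h. lia. simpl. apply in_or_app. destruct (Nat.eq_dec i k) as [e|e].
  - subst. right. left. reflexivity.
  - left. apply IHk. lia.
Qed.

Lemma ee_ON {H : RHilbert} (T : H -> H) : BL T -> 0 < opnorm T -> (forall x, ~ M_set T x) ->
  forall i j, inner (ee T i) (ee T j) = if Nat.eq_dec i j then 1 else 0.
Proof.
  intros hT hN hM i j. destruct (Nat.eq_dec i j) as [e|e].
  - subst. rewrite <- nrm_sq. rewrite (proj1 (proj2 (ee_spec T j hT hN hM))). ring.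
  - destruct (lt_dec j i) as [h|h].
    + apply (proj1 (ee_spec T i hT hN hM)). apply ee_in. auto.
    + rewrite inner_sym. apply (proj1 (ee_spec T j hT hN hM)). apply ee_in. lia.
Qed.

Lemma sep_c {H : RHilbert} (T : H -> H) : BL T -> 0 < opnorm T -> (forall x, ~ M_set T x) ->
  exists A u v L, sep T A u v L.
Proof.
  intros hT hN hM.
  set (E := fun k => ee T (2 * k)).
  assert (hON : ON E).
  { intros i j. unfold E. rewrite ee_ON by auto. destruct (Nat.eq_dec (2 * i) (2 * j)); destruct (Nat.eq_dec i j); auto; lia. }
  assert (hP := proj_BL E hON).
  exists (fun z => T (proj E z)), (fun n => ee T (2 * n + 1)), E, (opnorm T * opnorm T).
  split; [apply BL_comp; auto|split; [|split; [|split; [|split]]]].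
  - apply norming_of; auto; intro n; destruct (ee_spec T (2 * n + 1) hT hN hM) as [_ [h1 h2]]; auto.
    assert (opnorm T / (INR (2 * n + 1) + 2) <= opnorm T / (INR n + 2)).
    { apply Rmult_le_compat_l. lra. apply Rinv_le_contravar. pose proof (pos_INR n); lra.
      apply Rplus_le_compat_r. apply le_INR. lia. }
    lra.
  - unfold E. apply norming_of; auto; intro n; destruct (ee_spec T (2 * n) hT hN hM) as [_ [h1 h2]]; auto.
    assert (opnorm T / (INR (2 * n) + 2) <= opnorm T / (INR n + 2)).
    { apply Rmult_le_compat_l. lra. apply Rinv_le_contravar. pose proof (pos_INR n); lra.
      apply Rplus_le_compat_r. apply le_INR. lia. }
    lra.
  - apply (cv_ext (fun _ => 0)); [|apply cv_const]. intro n.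
    rewrite proj_orth; auto. rewrite lin_zero by apply hT. rewrite inner_0_l. reflexivity.
    intro k. unfold E. rewrite ee_ON by auto. destruct (Nat.eq_dec (2 * n + 1) (2 * k)); auto. lia.
  - apply (cv_ext (fun n => inner (T (E n)) (T (E n)))).
    + intro n. rewrite proj_E; auto.
    + apply (norming_sq T E). unfold E. apply norming_of; auto; intro n; destruct (ee_spec T (2 * n) hT hN hM) as [_ [h1 h2]]; auto.
      assert (opnorm T / (INR (2 * n) + 2) <= opnorm T / (INR n + 2)).
      { apply Rmult_le_compat_l. lra. apply Rinv_le_contravar. pose proof (pos_INR n); lra.
        apply Rplus_le_compat_r. apply le_INR. lia. }
      lra.
  - nra.
Qed.

Lemma not2_sep {H : RHilbert} (T : H -> H) : BL T -> 0 < opnorm T -> ~ cond2P T ->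
  exists A u v L, sep T A u v L.
Proof.
  intros hT hN hn. destruct (not2_cases T hT hn) as [[x [y [h1 [h2 [h3 h4]]]]]|[[x0 [h1 h2]]|h]].
  - exact (sep_a T x y hT hN h1 h2 h3 h4).
  - exact (sep_b T x0 hT hN h1 h2).
  - apply sep_c; auto.
Qed.

Theorem theorem3p2 (H : RHilbert) (T : H -> H) (HT : BL T)
  (HT0 : ~ (forall x, T x = vzero)) :
  let cond1 := smooth_point T in
  let cond2 := exists x0 : H, nrm x0 = 1 /\
      (forall x, M_set T x <-> (x = x0 \/ x = vopp x0)) /\
      opnorm_on T (orth x0) < opnorm T in
  let cond3 := forall A : H -> H, BL A ->
      (BJ_orth T A <->
       (forall xs, norming_seq T xs ->
        forall l, subseq_limit (fun n => inner (A (xs n)) (T (xs n))) l -> l = 0)) in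
  (cond1 <-> cond2) /\ (cond2 <-> cond3) /\ (cond1 <-> cond3).
Proof.
  intros cond1 cond2 cond3.
  pose proof (opnorm_pos T HT HT0) as hN.
  assert (h21 : cond2 -> cond1) by (apply ii_to_1; auto).
  assert (h23 : cond2 -> cond3) by (apply ii_to_3; auto).
  assert (h12 : cond1 -> cond2).
  { intros h1. apply NNPP. intro hn. destruct (not2_sep T HT hN hn) as [A [u [v [L hs]]]].
    exact (sep_not1 T A u v L HT hN hs h1). }
  assert (h32 : cond3 -> cond2).
  { intros h3. apply NNPP. intro hn. destruct (not2_sep T HT hN hn) as [A [u [v [L hs]]]].
    exact (sep_not3 T A u v L HT hs h3). }
  tauto.
Qed.
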